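(* Let $(\mathcal T(n))_{n\in\mathbb N}$ be the triangle Markov chain obtained by iterated random barycentric subdivision started from an arbitrary triangle $\mathcal T(0)$, and let $(X_n,Y_n)$ be the characterizing point of $\mathcal T(n)$. There exists a constant $\chi>0$ (not depending on $\mathcal T(0)$) such that almost surely $$\limsup_{n\to\infty}\frac1n\ln(Y_n)\le-\chi .$$
   Context: A triangle is given by three points of the plane which are not all equal (degenerate triangles with collinear vertices are allowed). Barycentric subdivision: if a triangle has vertices $A,B,C$, let $D,E,F$ be the midpoints of $[A,B],[B,C],[C,A]$ and $G$ its barycenter; the medians cut it into the six triangles $\{A,D,G\},\{D,B,G\},\{B,E,G\},\{E,C,G\},\{C,F,G\},\{F,A,G\}$. The triangle Markov chain: $\mathcal T(0)$ is given and, for each $n$, $\mathcal T(n+1)$ is chosen uniformly at random among the six triangles of the barycentric subdivision of $\mathcal T(n)$, independently of all previous choices. Characterizing point: for any triangle there is a similitude of the plane mapping it onto a triangle with vertices $(0,0)$, $(1,0)$, $(x,y)$, with $0\le x\le 1/2$, $y\ge 0$, sending its longest edge onto $[(0,0),(1,0)]$ and its shortest edge onto $[(0,0),(x,y)]$; the point $(x,y)$ is uniquely determined and is called the characterizing point of the triangle. The triangle is flat iff $y=0$. Convention $\ln 0=-\infty$. *)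

(* Defs.v *)
From HB Require Import structures.
From mathcomp Require Import all_boot all_order all_algebra.
From mathcomp Require Import all_classical all_reals all_analysis.
Set Implicit Arguments. Unset Strict Implicit. Unset Printing Implicit Defensive.
Import Order.TTheory GRing.Theory Num.Theory.
Local Open Scope ring_scope.
Local Open Scope classical_set_scope.

Section Triangles.
Variable R : realType.

Definition point := (R * R)%type.
Definition triangle := (point * point * point)%type.

Definition vA (t : triangle) : point := t.1.1.
Definition vB (t : triangle) : point := t.1.2.
Definition vC (t : triangle) : point := t.2.

Definition not_all_equal (t : triangle) : Prop :=
  ~ (vA t = vB t /\ vB t = vC t).

Definition padd (p q : point) : point := (p.1 + q.1, p.2 + q.2).
Definition pscale (a : R) (p : point) : point := (a * p.1, a * p.2).
Definition midpoint (p q : point) : point := pscale (2^-1) (padd p q).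
Definition barycenter (t : triangle) : point :=
  pscale (3^-1) (padd (vA t) (padd (vB t) (vC t))).

Definition subdiv_child (k : 'I_6) (t : triangle) : triangle :=
  let A := vA t in let B := vB t in let C := vC t in
  let D := midpoint A B in let E := midpoint B C in let F := midpoint C A in
  let G := barycenter t in
  match val k with
  | 0 => (A, D, G)
  | 1 => (D, B, G)
  | 2 => (B, E, G)
  | 3 => (E, C, G)
  | 4 => (C, F, G)
  | _ => (F, A, G)
  end.

Fixpoint tri_chain (T : Type) (T0 : triangle) (c : nat -> T -> 'I_6)
   (w : T) (n : nat) : triangle :=
  match n with
  | 0 => T0
  | m.+1 => subdiv_child (c m w) (tri_chain T0 c w m)
  end.

Definition dist (p q : point) : R :=
  Num.sqrt ((p.1 - q.1) ^+ 2 + (p.2 - q.2) ^+ 2).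

Definition side_long (t : triangle) : R :=
  Num.max (dist (vA t) (vB t)) (Num.max (dist (vB t) (vC t)) (dist (vC t) (vA t))).
Definition side_short (t : triangle) : R :=
  Num.min (dist (vA t) (vB t)) (Num.min (dist (vB t) (vC t)) (dist (vC t) (vA t))).
Definition side_mid (t : triangle) : R :=
  dist (vA t) (vB t) + dist (vB t) (vC t) + dist (vC t) (vA t)
  - side_long t - side_short t.

(* characterizing point (x,y): image of the third vertex under the
   similitude sending the longest edge to [(0,0),(1,0)] and the shortest
   edge to [(0,0),(x,y)], y >= 0.  So |(x,y)| = s/l, |(x,y)-(1,0)| = m/l. *)
Definition char_x (t : triangle) : R :=
  (side_long t ^+ 2 + side_short t ^+ 2 - side_mid t ^+ 2)
    / (2 * side_long t ^+ 2).
Definition char_y (t : triangle) : R :=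
  Num.sqrt ((side_short t / side_long t) ^+ 2 - char_x t ^+ 2).
Definition char_point (t : triangle) : point := (char_x t, char_y t).

Definition lnE (y : R) : \bar R := if y == 0 then -oo%E else (ln y)%:E.

End Triangles.

Definition iid_uniform6 (d : measure_display) (T : measurableType d)
  (R : realType) (P : probability T R) (c : nat -> T -> 'I_6) : Prop :=
  (forall n (k : 'I_6), measurable [set w | c n w = k]) /\
  (forall (S : seq nat) (f : nat -> 'I_6), uniq S ->
     P [set w | forall i, i \in S -> c i w = f i]
       = ((6%:R : R)^-1 ^+ size S)%:E).

(* Main.v *)
Require Import Defs.
From HB Require Import structures.
From mathcomp Require Import all_boot all_order all_algebra.
From mathcomp Require Import all_classical all_reals all_analysis.
From mathcomp Require Import ring lra.
Import Order.TTheory GRing.Theory Num.Theory.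
Local Open Scope ring_scope.
Local Open Scope classical_set_scope.

Section G.
Variable R : realType.
Definition Hr (x y z : R) := 2*x*y+2*y*z+2*z*x-x^+2-y^+2-z^+2.
Definition Tm (S L : R) := Num.sqrt (36 * S / L).
Definition Phi (p q r : R) :=
  Tm (p+q+r) (16 * p - 2 * q + 10 * r) + Tm (p+q+r) (16 * p + 10 * q - 2 * r) +
  Tm (p+q+r) (16 * q + 10 * p - 2 * r) + Tm (p+q+r) (16 * q + 10 * r - 2 * p) +
  Tm (p+q+r) (16 * r + 10 * q - 2 * p) + Tm (p+q+r) (16 * r + 10 * p - 2 * q).

Lemma Tm_le {S L s : R} : 0 < L -> 0 <= s -> 36 * S <= s ^+ 2 * L -> Tm S L <= s.
Proof.
move=> hL hs h; rewrite /Tm -[X in _ <= X](ger0_norm hs) -sqrtr_sqr.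
by apply: ler_wsqrtr; rewrite ler_pdivrMr.
Qed.



Lemma heron_skip {q r q2 r2 : R} : 0 <= q -> q <= q2 -> 0 <= r -> r <= r2 -> q2 + r2 <= 1 ->
  4 * q2 * r2 < (1 - q2 - r2) ^+ 2 -> 0 <= Hr 1 q r -> False.
Proof.
move=> hq hq2 hr hr2 h1 h2; rewrite /Hr.
have e1 : q * r <= q2 * r2 by apply: ler_pM.
have e2 : (1 - q2 - r2) ^+ 2 <= (1 - q - r) ^+ 2 by rewrite ler_sqr ?nnegrE; lra.
nra.
Qed.

Lemma Tm_le2 {S L s : R} : 0 < S -> 0 <= s -> 36 * S <= s ^+ 2 * L -> Tm S L <= s.
Proof.
move=> hS hs h; case: (ltP 0 L) => hL; first exact: Tm_le.
have : s ^+ 2 * L <= 0 by rewrite mulr_ge0_le0 ?sqr_ge0.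
lra.
Qed.

Lemma leafN {p q r : R} (a0 a1 a2 a3 a4 a5 : nat) :
  0 < p + q + r -> 36 * (p+q+r) <= (a0%:R / 1000) ^+ 2 * (16 * p - 2 * q + 10 * r) /\ 36 * (p+q+r) <= (a1%:R / 1000) ^+ 2 * (16 * p + 10 * q - 2 * r) /\ 36 * (p+q+r) <= (a2%:R / 1000) ^+ 2 * (16 * q + 10 * p - 2 * r) /\ 36 * (p+q+r) <= (a3%:R / 1000) ^+ 2 * (16 * q + 10 * r - 2 * p) /\ 36 * (p+q+r) <= (a4%:R / 1000) ^+ 2 * (16 * r + 10 * q - 2 * p) /\ 36 * (p+q+r) <= (a5%:R / 1000) ^+ 2 * (16 * r + 10 * p - 2 * q) /\ (a0%:R / 1000 : R) + a1%:R / 1000 + a2%:R / 1000 + a3%:R / 1000 + a4%:R / 1000 + a5%:R / 1000 <= 146 / 10 -> Phi p q r <= 146 / 10.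
Proof.
move=> hS [h0 [h1 [h2 [h3 [h4 [h5 hs]]]]]].
have g : forall a : nat, 0 <= (a%:R / 1000 : R) by move=> a; apply: divr_ge0; apply: ler0n.
have := Tm_le2 hS (g _) h0; have := Tm_le2 hS (g _) h1; have := Tm_le2 hS (g _) h2;
have := Tm_le2 hS (g _) h3; have := Tm_le2 hS (g _) h4; have := Tm_le2 hS (g _) h5.
rewrite /Phi; lra.
Qed.

Definition Bx (q1 q2 r1 r2 q r : R) := q1 <= q /\ q <= q2 /\ r1 <= r /\ r <= r2.

Lemma split4 {q1 q2 r1 r2 : R} (qm rm : R) {q r : R} : Bx q1 q2 r1 r2 q r ->
  Bx q1 qm r1 rm q r \/ Bx q1 qm rm r2 q r \/ Bx qm q2 r1 rm q r \/ Bx qm q2 rm r2 q r.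
Proof.
rewrite /Bx => -[? [? [? ?]]].
case: (leP q qm) => ?; case: (leP r rm) => ?.
- by left; lra.
- by right; left; lra.
- by right; right; left; lra.
- by right; right; right; lra.
Qed.

Lemma nd4 (q r : R) : Bx 0 (1 / 8) 0 (1 / 8) q r -> r <= q -> 0 <= Hr 1 q r -> Phi 1 q r <= 146 / 10.
Proof.
move=> [? [? [? ?]]] ? hH; exfalso; apply: (heron_skip (q2:=(1 / 8)) (r2:=(1 / 8)) _ _ _ _ _ _ hH); lra.
Qed.

Lemma nd5 (q r : R) : Bx 0 (1 / 8) (1 / 8) (1 / 4) q r -> r <= q -> 0 <= Hr 1 q r -> Phi 1 q r <= 146 / 10.
Proof.
move=> [? [? [? ?]]] ? hH; exfalso; apply: (heron_skip (q2:=(1 / 8)) (r2:=(1 / 4)) _ _ _ _ _ _ hH); lra.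
Qed.

Lemma nd6 (q r : R) : Bx (1 / 8) (1 / 4) 0 (1 / 8) q r -> r <= q -> 0 <= Hr 1 q r -> Phi 1 q r <= 146 / 10.
Proof.
move=> [? [? [? ?]]] ? hH; exfalso; apply: (heron_skip (q2:=(1 / 4)) (r2:=(1 / 8)) _ _ _ _ _ _ hH); lra.
Qed.

Lemma nd8 (q r : R) : Bx (1 / 8) (3 / 16) (1 / 8) (3 / 16) q r -> r <= q -> 0 <= Hr 1 q r -> Phi 1 q r <= 146 / 10.
Proof.
move=> [? [? [? ?]]] ? hH; exfalso; apply: (heron_skip (q2:=(3 / 16)) (r2:=(3 / 16)) _ _ _ _ _ _ hH); lra.
Qed.

Lemma nd9 (q r : R) : Bx (1 / 8) (3 / 16) (3 / 16) (1 / 4) q r -> r <= q -> 0 <= Hr 1 q r -> Phi 1 q r <= 146 / 10.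
Proof.
move=> [? [? [? ?]]] ? hH; exfalso; apply: (heron_skip (q2:=(3 / 16)) (r2:=(1 / 4)) _ _ _ _ _ _ hH); lra.
Qed.

Lemma nd10 (q r : R) : Bx (3 / 16) (1 / 4) (1 / 8) (3 / 16) q r -> r <= q -> 0 <= Hr 1 q r -> Phi 1 q r <= 146 / 10.
Proof.
move=> [? [? [? ?]]] ? hH; exfalso; apply: (heron_skip (q2:=(1 / 4)) (r2:=(3 / 16)) _ _ _ _ _ _ hH); lra.
Qed.

Lemma nd12 (q r : R) : Bx (3 / 16) (7 / 32) (3 / 16) (7 / 32) q r -> r <= q -> 0 <= Hr 1 q r -> Phi 1 q r <= 146 / 10.
Proof.
move=> [? [? [? ?]]] ? hH; exfalso; apply: (heron_skip (q2:=(7 / 32)) (r2:=(7 / 32)) _ _ _ _ _ _ hH); lra.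
Qed.

Lemma nd13 (q r : R) : Bx (3 / 16) (7 / 32) (7 / 32) (1 / 4) q r -> r <= q -> 0 <= Hr 1 q r -> Phi 1 q r <= 146 / 10.
Proof.
move=> [? [? [? ?]]] ? hH; exfalso; apply: (heron_skip (q2:=(7 / 32)) (r2:=(1 / 4)) _ _ _ _ _ _ hH); lra.
Qed.

Lemma nd14 (q r : R) : Bx (7 / 32) (1 / 4) (3 / 16) (7 / 32) q r -> r <= q -> 0 <= Hr 1 q r -> Phi 1 q r <= 146 / 10.
Proof.
move=> [? [? [? ?]]] ? hH; exfalso; apply: (heron_skip (q2:=(1 / 4)) (r2:=(7 / 32)) _ _ _ _ _ _ hH); lra.
Qed.

Lemma nd16 (q r : R) : Bx (7 / 32) (15 / 64) (7 / 32) (15 / 64) q r -> r <= q -> 0 <= Hr 1 q r -> Phi 1 q r <= 146 / 10.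
Proof.
move=> [? [? [? ?]]] ? hH; exfalso; apply: (heron_skip (q2:=(15 / 64)) (r2:=(15 / 64)) _ _ _ _ _ _ hH); lra.
Qed.

Lemma nd17 (q r : R) : Bx (7 / 32) (15 / 64) (15 / 64) (1 / 4) q r -> r <= q -> 0 <= Hr 1 q r -> Phi 1 q r <= 146 / 10.
Proof.
move=> [? [? [? ?]]] ? hH; exfalso; apply: (heron_skip (q2:=(15 / 64)) (r2:=(1 / 4)) _ _ _ _ _ _ hH); lra.
Qed.

Lemma nd18 (q r : R) : Bx (15 / 64) (1 / 4) (7 / 32) (15 / 64) q r -> r <= q -> 0 <= Hr 1 q r -> Phi 1 q r <= 146 / 10.
Proof.
move=> [? [? [? ?]]] ? hH; exfalso; apply: (heron_skip (q2:=(1 / 4)) (r2:=(15 / 64)) _ _ _ _ _ _ hH); lra.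
Qed.

Lemma nd20 (q r : R) : Bx (15 / 64) (31 / 128) (15 / 64) (31 / 128) q r -> r <= q -> 0 <= Hr 1 q r -> Phi 1 q r <= 146 / 10.
Proof.
move=> [? [? [? ?]]] ? hH; exfalso; apply: (heron_skip (q2:=(31 / 128)) (r2:=(31 / 128)) _ _ _ _ _ _ hH); lra.
Qed.

Lemma nd21 (q r : R) : Bx (15 / 64) (31 / 128) (31 / 128) (1 / 4) q r -> r <= q -> 0 <= Hr 1 q r -> Phi 1 q r <= 146 / 10.
Proof.
move=> [? [? [? ?]]] ? hH; exfalso; apply: (heron_skip (q2:=(31 / 128)) (r2:=(1 / 4)) _ _ _ _ _ _ hH); lra.
Qed.

Lemma nd22 (q r : R) : Bx (31 / 128) (1 / 4) (15 / 64) (31 / 128) q r -> r <= q -> 0 <= Hr 1 q r -> Phi 1 q r <= 146 / 10.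
Proof.
move=> [? [? [? ?]]] ? hH; exfalso; apply: (heron_skip (q2:=(1 / 4)) (r2:=(31 / 128)) _ _ _ _ _ _ hH); lra.
Qed.

Lemma nd23 (q r : R) : Bx (31 / 128) (1 / 4) (31 / 128) (1 / 4) q r -> r <= q -> 0 <= Hr 1 q r -> Phi 1 q r <= 146 / 10.
Proof.
move=> [? [? [? ?]]] ? ?; apply: (leafN 1733 1733 2005 3527 3527 2005); lra.
Qed.

Lemma nd19 (q r : R) : Bx (15 / 64) (1 / 4) (15 / 64) (1 / 4) q r -> r <= q -> 0 <= Hr 1 q r -> Phi 1 q r <= 146 / 10.
Proof.
move=> hb hrq hH; case: (split4 (31 / 128) (31 / 128) hb) => [h|[h|[h|h]]]; [exact: (nd20 _ _ h hrq hH) | exact: (nd21 _ _ h hrq hH) | exact: (nd22 _ _ h hrq hH) | exact: (nd23 _ _ h hrq hH)].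
Qed.

Lemma nd15 (q r : R) : Bx (7 / 32) (1 / 4) (7 / 32) (1 / 4) q r -> r <= q -> 0 <= Hr 1 q r -> Phi 1 q r <= 146 / 10.
Proof.
move=> hb hrq hH; case: (split4 (15 / 64) (15 / 64) hb) => [h|[h|[h|h]]]; [exact: (nd16 _ _ h hrq hH) | exact: (nd17 _ _ h hrq hH) | exact: (nd18 _ _ h hrq hH) | exact: (nd19 _ _ h hrq hH)].
Qed.

Lemma nd11 (q r : R) : Bx (3 / 16) (1 / 4) (3 / 16) (1 / 4) q r -> r <= q -> 0 <= Hr 1 q r -> Phi 1 q r <= 146 / 10.
Proof.
move=> hb hrq hH; case: (split4 (7 / 32) (7 / 32) hb) => [h|[h|[h|h]]]; [exact: (nd12 _ _ h hrq hH) | exact: (nd13 _ _ h hrq hH) | exact: (nd14 _ _ h hrq hH) | exact: (nd15 _ _ h hrq hH)].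
Qed.

Lemma nd7 (q r : R) : Bx (1 / 8) (1 / 4) (1 / 8) (1 / 4) q r -> r <= q -> 0 <= Hr 1 q r -> Phi 1 q r <= 146 / 10.
Proof.
move=> hb hrq hH; case: (split4 (3 / 16) (3 / 16) hb) => [h|[h|[h|h]]]; [exact: (nd8 _ _ h hrq hH) | exact: (nd9 _ _ h hrq hH) | exact: (nd10 _ _ h hrq hH) | exact: (nd11 _ _ h hrq hH)].
Qed.

Lemma nd3 (q r : R) : Bx 0 (1 / 4) 0 (1 / 4) q r -> r <= q -> 0 <= Hr 1 q r -> Phi 1 q r <= 146 / 10.
Proof.
move=> hb hrq hH; case: (split4 (1 / 8) (1 / 8) hb) => [h|[h|[h|h]]]; [exact: (nd4 _ _ h hrq hH) | exact: (nd5 _ _ h hrq hH) | exact: (nd6 _ _ h hrq hH) | exact: (nd7 _ _ h hrq hH)].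
Qed.

Lemma nd25 (q r : R) : Bx 0 (1 / 8) (1 / 4) (3 / 8) q r -> r <= q -> 0 <= Hr 1 q r -> Phi 1 q r <= 146 / 10.
Proof.
move=> [? [? [? ?]]] ? ?; lra.
Qed.

Lemma nd26 (q r : R) : Bx 0 (1 / 8) (3 / 8) (1 / 2) q r -> r <= q -> 0 <= Hr 1 q r -> Phi 1 q r <= 146 / 10.
Proof.
move=> [? [? [? ?]]] ? ?; lra.
Qed.

Lemma nd28 (q r : R) : Bx (1 / 8) (3 / 16) (1 / 4) (5 / 16) q r -> r <= q -> 0 <= Hr 1 q r -> Phi 1 q r <= 146 / 10.
Proof.
move=> [? [? [? ?]]] ? ?; lra.
Qed.

Lemma nd29 (q r : R) : Bx (1 / 8) (3 / 16) (5 / 16) (3 / 8) q r -> r <= q -> 0 <= Hr 1 q r -> Phi 1 q r <= 146 / 10.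
Proof.
move=> [? [? [? ?]]] ? ?; lra.
Qed.

Lemma nd31 (q r : R) : Bx (3 / 16) (7 / 32) (1 / 4) (9 / 32) q r -> r <= q -> 0 <= Hr 1 q r -> Phi 1 q r <= 146 / 10.
Proof.
move=> [? [? [? ?]]] ? ?; lra.
Qed.

Lemma nd32 (q r : R) : Bx (3 / 16) (7 / 32) (9 / 32) (5 / 16) q r -> r <= q -> 0 <= Hr 1 q r -> Phi 1 q r <= 146 / 10.
Proof.
move=> [? [? [? ?]]] ? ?; lra.
Qed.

Lemma nd34 (q r : R) : Bx (7 / 32) (15 / 64) (1 / 4) (17 / 64) q r -> r <= q -> 0 <= Hr 1 q r -> Phi 1 q r <= 146 / 10.
Proof.
move=> [? [? [? ?]]] ? ?; lra.
Qed.

Lemma nd35 (q r : R) : Bx (7 / 32) (15 / 64) (17 / 64) (9 / 32) q r -> r <= q -> 0 <= Hr 1 q r -> Phi 1 q r <= 146 / 10.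
Proof.
move=> [? [? [? ?]]] ? ?; lra.
Qed.

Lemma nd36 (q r : R) : Bx (15 / 64) (1 / 4) (1 / 4) (17 / 64) q r -> r <= q -> 0 <= Hr 1 q r -> Phi 1 q r <= 146 / 10.
Proof.
move=> [? [? [? ?]]] ? ?; apply: (leafN 1734 1743 2022 3546 3508 2000); lra.
Qed.

Lemma nd37 (q r : R) : Bx (15 / 64) (1 / 4) (17 / 64) (9 / 32) q r -> r <= q -> 0 <= Hr 1 q r -> Phi 1 q r <= 146 / 10.
Proof.
move=> [? [? [? ?]]] ? ?; lra.
Qed.

Lemma nd33 (q r : R) : Bx (7 / 32) (1 / 4) (1 / 4) (9 / 32) q r -> r <= q -> 0 <= Hr 1 q r -> Phi 1 q r <= 146 / 10.
Proof.
move=> hb hrq hH; case: (split4 (15 / 64) (17 / 64) hb) => [h|[h|[h|h]]]; [exact: (nd34 _ _ h hrq hH) | exact: (nd35 _ _ h hrq hH) | exact: (nd36 _ _ h hrq hH) | exact: (nd37 _ _ h hrq hH)].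
Qed.

Lemma nd38 (q r : R) : Bx (7 / 32) (1 / 4) (9 / 32) (5 / 16) q r -> r <= q -> 0 <= Hr 1 q r -> Phi 1 q r <= 146 / 10.
Proof.
move=> [? [? [? ?]]] ? ?; lra.
Qed.

Lemma nd30 (q r : R) : Bx (3 / 16) (1 / 4) (1 / 4) (5 / 16) q r -> r <= q -> 0 <= Hr 1 q r -> Phi 1 q r <= 146 / 10.
Proof.
move=> hb hrq hH; case: (split4 (7 / 32) (9 / 32) hb) => [h|[h|[h|h]]]; [exact: (nd31 _ _ h hrq hH) | exact: (nd32 _ _ h hrq hH) | exact: (nd33 _ _ h hrq hH) | exact: (nd38 _ _ h hrq hH)].
Qed.

Lemma nd39 (q r : R) : Bx (3 / 16) (1 / 4) (5 / 16) (3 / 8) q r -> r <= q -> 0 <= Hr 1 q r -> Phi 1 q r <= 146 / 10.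
Proof.
move=> [? [? [? ?]]] ? ?; lra.
Qed.

Lemma nd27 (q r : R) : Bx (1 / 8) (1 / 4) (1 / 4) (3 / 8) q r -> r <= q -> 0 <= Hr 1 q r -> Phi 1 q r <= 146 / 10.
Proof.
move=> hb hrq hH; case: (split4 (3 / 16) (5 / 16) hb) => [h|[h|[h|h]]]; [exact: (nd28 _ _ h hrq hH) | exact: (nd29 _ _ h hrq hH) | exact: (nd30 _ _ h hrq hH) | exact: (nd39 _ _ h hrq hH)].
Qed.

Lemma nd40 (q r : R) : Bx (1 / 8) (1 / 4) (3 / 8) (1 / 2) q r -> r <= q -> 0 <= Hr 1 q r -> Phi 1 q r <= 146 / 10.
Proof.
move=> [? [? [? ?]]] ? ?; lra.
Qed.

Lemma nd24 (q r : R) : Bx 0 (1 / 4) (1 / 4) (1 / 2) q r -> r <= q -> 0 <= Hr 1 q r -> Phi 1 q r <= 146 / 10.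
Proof.
move=> hb hrq hH; case: (split4 (1 / 8) (3 / 8) hb) => [h|[h|[h|h]]]; [exact: (nd25 _ _ h hrq hH) | exact: (nd26 _ _ h hrq hH) | exact: (nd27 _ _ h hrq hH) | exact: (nd40 _ _ h hrq hH)].
Qed.

Lemma nd42 (q r : R) : Bx (1 / 4) (3 / 8) 0 (1 / 8) q r -> r <= q -> 0 <= Hr 1 q r -> Phi 1 q r <= 146 / 10.
Proof.
move=> [? [? [? ?]]] ? hH; exfalso; apply: (heron_skip (q2:=(3 / 8)) (r2:=(1 / 8)) _ _ _ _ _ _ hH); lra.
Qed.

Lemma nd44 (q r : R) : Bx (1 / 4) (5 / 16) (1 / 8) (3 / 16) q r -> r <= q -> 0 <= Hr 1 q r -> Phi 1 q r <= 146 / 10.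
Proof.
move=> [? [? [? ?]]] ? hH; exfalso; apply: (heron_skip (q2:=(5 / 16)) (r2:=(3 / 16)) _ _ _ _ _ _ hH); lra.
Qed.

Lemma nd46 (q r : R) : Bx (1 / 4) (9 / 32) (3 / 16) (7 / 32) q r -> r <= q -> 0 <= Hr 1 q r -> Phi 1 q r <= 146 / 10.
Proof.
move=> [? [? [? ?]]] ? hH; exfalso; apply: (heron_skip (q2:=(9 / 32)) (r2:=(7 / 32)) _ _ _ _ _ _ hH); lra.
Qed.

Lemma nd48 (q r : R) : Bx (1 / 4) (17 / 64) (7 / 32) (15 / 64) q r -> r <= q -> 0 <= Hr 1 q r -> Phi 1 q r <= 146 / 10.
Proof.
move=> [? [? [? ?]]] ? hH; exfalso; apply: (heron_skip (q2:=(17 / 64)) (r2:=(15 / 64)) _ _ _ _ _ _ hH); lra.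
Qed.

Lemma nd49 (q r : R) : Bx (1 / 4) (17 / 64) (15 / 64) (1 / 4) q r -> r <= q -> 0 <= Hr 1 q r -> Phi 1 q r <= 146 / 10.
Proof.
move=> [? [? [? ?]]] ? ?; apply: (leafN 1743 1734 2000 3508 3546 2022); lra.
Qed.

Lemma nd50 (q r : R) : Bx (17 / 64) (9 / 32) (7 / 32) (15 / 64) q r -> r <= q -> 0 <= Hr 1 q r -> Phi 1 q r <= 146 / 10.
Proof.
move=> [? [? [? ?]]] ? ?; apply: (leafN 1752 1725 1980 3471 3586 2044); lra.
Qed.

Lemma nd51 (q r : R) : Bx (17 / 64) (9 / 32) (15 / 64) (1 / 4) q r -> r <= q -> 0 <= Hr 1 q r -> Phi 1 q r <= 146 / 10.
Proof.
move=> [? [? [? ?]]] ? ?; apply: (leafN 1754 1736 1993 3429 3501 2035); lra.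
Qed.

Lemma nd47 (q r : R) : Bx (1 / 4) (9 / 32) (7 / 32) (1 / 4) q r -> r <= q -> 0 <= Hr 1 q r -> Phi 1 q r <= 146 / 10.
Proof.
move=> hb hrq hH; case: (split4 (17 / 64) (15 / 64) hb) => [h|[h|[h|h]]]; [exact: (nd48 _ _ h hrq hH) | exact: (nd49 _ _ h hrq hH) | exact: (nd50 _ _ h hrq hH) | exact: (nd51 _ _ h hrq hH)].
Qed.

Lemma nd53 (q r : R) : Bx (9 / 32) (19 / 64) (3 / 16) (13 / 64) q r -> r <= q -> 0 <= Hr 1 q r -> Phi 1 q r <= 146 / 10.
Proof.
move=> [? [? [? ?]]] ? hH; exfalso; apply: (heron_skip (q2:=(19 / 64)) (r2:=(13 / 64)) _ _ _ _ _ _ hH); lra.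
Qed.

Lemma nd54 (q r : R) : Bx (9 / 32) (19 / 64) (13 / 64) (7 / 32) q r -> r <= q -> 0 <= Hr 1 q r -> Phi 1 q r <= 146 / 10.
Proof.
move=> [? [? [? ?]]] ? ?; apply: (leafN 1762 1716 1960 3435 3627 2066); lra.
Qed.

Lemma nd55 (q r : R) : Bx (19 / 64) (5 / 16) (3 / 16) (13 / 64) q r -> r <= q -> 0 <= Hr 1 q r -> Phi 1 q r <= 146 / 10.
Proof.
move=> [? [? [? ?]]] ? ?; apply: (leafN 1771 1708 1941 3400 3670 2089); lra.
Qed.

Lemma nd56 (q r : R) : Bx (19 / 64) (5 / 16) (13 / 64) (7 / 32) q r -> r <= q -> 0 <= Hr 1 q r -> Phi 1 q r <= 146 / 10.
Proof.
move=> [? [? [? ?]]] ? ?; apply: (leafN 1772 1718 1953 3361 3578 2079); lra.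
Qed.

Lemma nd52 (q r : R) : Bx (9 / 32) (5 / 16) (3 / 16) (7 / 32) q r -> r <= q -> 0 <= Hr 1 q r -> Phi 1 q r <= 146 / 10.
Proof.
move=> hb hrq hH; case: (split4 (19 / 64) (13 / 64) hb) => [h|[h|[h|h]]]; [exact: (nd53 _ _ h hrq hH) | exact: (nd54 _ _ h hrq hH) | exact: (nd55 _ _ h hrq hH) | exact: (nd56 _ _ h hrq hH)].
Qed.

Lemma nd57 (q r : R) : Bx (9 / 32) (5 / 16) (7 / 32) (1 / 4) q r -> r <= q -> 0 <= Hr 1 q r -> Phi 1 q r <= 146 / 10.
Proof.
move=> [? [? [? ?]]] ? ?; apply: (leafN 1774 1738 1985 3395 3539 2070); lra.
Qed.

Lemma nd45 (q r : R) : Bx (1 / 4) (5 / 16) (3 / 16) (1 / 4) q r -> r <= q -> 0 <= Hr 1 q r -> Phi 1 q r <= 146 / 10.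
Proof.
move=> hb hrq hH; case: (split4 (9 / 32) (7 / 32) hb) => [h|[h|[h|h]]]; [exact: (nd46 _ _ h hrq hH) | exact: (nd47 _ _ h hrq hH) | exact: (nd52 _ _ h hrq hH) | exact: (nd57 _ _ h hrq hH)].
Qed.

Lemma nd59 (q r : R) : Bx (5 / 16) (11 / 32) (1 / 8) (5 / 32) q r -> r <= q -> 0 <= Hr 1 q r -> Phi 1 q r <= 146 / 10.
Proof.
move=> [? [? [? ?]]] ? hH; exfalso; apply: (heron_skip (q2:=(11 / 32)) (r2:=(5 / 32)) _ _ _ _ _ _ hH); lra.
Qed.

Lemma nd61 (q r : R) : Bx (5 / 16) (21 / 64) (5 / 32) (11 / 64) q r -> r <= q -> 0 <= Hr 1 q r -> Phi 1 q r <= 146 / 10.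
Proof.
move=> [? [? [? ?]]] ? hH; exfalso; apply: (heron_skip (q2:=(21 / 64)) (r2:=(11 / 64)) _ _ _ _ _ _ hH); lra.
Qed.

Lemma nd62 (q r : R) : Bx (5 / 16) (21 / 64) (11 / 64) (3 / 16) q r -> r <= q -> 0 <= Hr 1 q r -> Phi 1 q r <= 146 / 10.
Proof.
move=> [? [? [? ?]]] ? ?; apply: (leafN 1781 1699 1922 3366 3714 2114); lra.
Qed.

Lemma nd64 (q r : R) : Bx (21 / 64) (43 / 128) (5 / 32) (21 / 128) q r -> r <= q -> 0 <= Hr 1 q r -> Phi 1 q r <= 146 / 10.
Proof.
move=> [? [? [? ?]]] ? hH; exfalso; apply: (heron_skip (q2:=(43 / 128)) (r2:=(21 / 128)) _ _ _ _ _ _ hH); lra.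
Qed.

Lemma nd65 (q r : R) : Bx (21 / 64) (43 / 128) (21 / 128) (11 / 64) q r -> r <= q -> 0 <= Hr 1 q r -> Phi 1 q r <= 146 / 10.
Proof.
move=> [? [? [? ?]]] ? hH; exfalso; apply: (heron_skip (q2:=(43 / 128)) (r2:=(11 / 64)) _ _ _ _ _ _ hH); lra.
Qed.

Lemma nd66 (q r : R) : Bx (43 / 128) (11 / 32) (5 / 32) (21 / 128) q r -> r <= q -> 0 <= Hr 1 q r -> Phi 1 q r <= 146 / 10.
Proof.
move=> [? [? [? ?]]] ? hH; exfalso; apply: (heron_skip (q2:=(11 / 32)) (r2:=(21 / 128)) _ _ _ _ _ _ hH); lra.
Qed.

Lemma nd67 (q r : R) : Bx (43 / 128) (11 / 32) (21 / 128) (11 / 64) q r -> r <= q -> 0 <= Hr 1 q r -> Phi 1 q r <= 146 / 10.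
Proof.
move=> [? [? [? ?]]] ? ?; apply: (leafN 1790 1691 1901 3282 3682 2133); lra.
Qed.

Lemma nd63 (q r : R) : Bx (21 / 64) (11 / 32) (5 / 32) (11 / 64) q r -> r <= q -> 0 <= Hr 1 q r -> Phi 1 q r <= 146 / 10.
Proof.
move=> hb hrq hH; case: (split4 (43 / 128) (21 / 128) hb) => [h|[h|[h|h]]]; [exact: (nd64 _ _ h hrq hH) | exact: (nd65 _ _ h hrq hH) | exact: (nd66 _ _ h hrq hH) | exact: (nd67 _ _ h hrq hH)].
Qed.

Lemma nd68 (q r : R) : Bx (21 / 64) (11 / 32) (11 / 64) (3 / 16) q r -> r <= q -> 0 <= Hr 1 q r -> Phi 1 q r <= 146 / 10.
Proof.
move=> [? [? [? ?]]] ? ?; apply: (leafN 1791 1701 1916 3297 3660 2127); lra.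
Qed.

Lemma nd60 (q r : R) : Bx (5 / 16) (11 / 32) (5 / 32) (3 / 16) q r -> r <= q -> 0 <= Hr 1 q r -> Phi 1 q r <= 146 / 10.
Proof.
move=> hb hrq hH; case: (split4 (21 / 64) (11 / 64) hb) => [h|[h|[h|h]]]; [exact: (nd61 _ _ h hrq hH) | exact: (nd62 _ _ h hrq hH) | exact: (nd63 _ _ h hrq hH) | exact: (nd68 _ _ h hrq hH)].
Qed.

Lemma nd70 (q r : R) : Bx (11 / 32) (23 / 64) (1 / 8) (9 / 64) q r -> r <= q -> 0 <= Hr 1 q r -> Phi 1 q r <= 146 / 10.
Proof.
move=> [? [? [? ?]]] ? hH; exfalso; apply: (heron_skip (q2:=(23 / 64)) (r2:=(9 / 64)) _ _ _ _ _ _ hH); lra.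
Qed.

Lemma nd71 (q r : R) : Bx (11 / 32) (23 / 64) (9 / 64) (5 / 32) q r -> r <= q -> 0 <= Hr 1 q r -> Phi 1 q r <= 146 / 10.
Proof.
move=> [? [? [? ?]]] ? hH; exfalso; apply: (heron_skip (q2:=(23 / 64)) (r2:=(5 / 32)) _ _ _ _ _ _ hH); lra.
Qed.

Lemma nd72 (q r : R) : Bx (23 / 64) (3 / 8) (1 / 8) (9 / 64) q r -> r <= q -> 0 <= Hr 1 q r -> Phi 1 q r <= 146 / 10.
Proof.
move=> [? [? [? ?]]] ? hH; exfalso; apply: (heron_skip (q2:=(3 / 8)) (r2:=(9 / 64)) _ _ _ _ _ _ hH); lra.
Qed.

Lemma nd73 (q r : R) : Bx (23 / 64) (3 / 8) (9 / 64) (5 / 32) q r -> r <= q -> 0 <= Hr 1 q r -> Phi 1 q r <= 146 / 10.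
Proof.
move=> [? [? [? ?]]] ? ?; apply: (leafN 1811 1685 1881 3237 3749 2179); lra.
Qed.

Lemma nd69 (q r : R) : Bx (11 / 32) (3 / 8) (1 / 8) (5 / 32) q r -> r <= q -> 0 <= Hr 1 q r -> Phi 1 q r <= 146 / 10.
Proof.
move=> hb hrq hH; case: (split4 (23 / 64) (9 / 64) hb) => [h|[h|[h|h]]]; [exact: (nd70 _ _ h hrq hH) | exact: (nd71 _ _ h hrq hH) | exact: (nd72 _ _ h hrq hH) | exact: (nd73 _ _ h hrq hH)].
Qed.

Lemma nd74 (q r : R) : Bx (11 / 32) (3 / 8) (5 / 32) (3 / 16) q r -> r <= q -> 0 <= Hr 1 q r -> Phi 1 q r <= 146 / 10.
Proof.
move=> [? [? [? ?]]] ? ?; apply: (leafN 1813 1704 1910 3266 3704 2166); lra.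
Qed.

Lemma nd58 (q r : R) : Bx (5 / 16) (3 / 8) (1 / 8) (3 / 16) q r -> r <= q -> 0 <= Hr 1 q r -> Phi 1 q r <= 146 / 10.
Proof.
move=> hb hrq hH; case: (split4 (11 / 32) (5 / 32) hb) => [h|[h|[h|h]]]; [exact: (nd59 _ _ h hrq hH) | exact: (nd60 _ _ h hrq hH) | exact: (nd69 _ _ h hrq hH) | exact: (nd74 _ _ h hrq hH)].
Qed.

Lemma nd76 (q r : R) : Bx (5 / 16) (11 / 32) (3 / 16) (7 / 32) q r -> r <= q -> 0 <= Hr 1 q r -> Phi 1 q r <= 146 / 10.
Proof.
move=> [? [? [? ?]]] ? ?; apply: (leafN 1793 1721 1946 3329 3619 2116); lra.
Qed.

Lemma nd77 (q r : R) : Bx (5 / 16) (11 / 32) (7 / 32) (1 / 4) q r -> r <= q -> 0 <= Hr 1 q r -> Phi 1 q r <= 146 / 10.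
Proof.
move=> [? [? [? ?]]] ? ?; apply: (leafN 1795 1741 1970 3260 3453 2096); lra.
Qed.

Lemma nd78 (q r : R) : Bx (11 / 32) (3 / 8) (3 / 16) (7 / 32) q r -> r <= q -> 0 <= Hr 1 q r -> Phi 1 q r <= 146 / 10.
Proof.
move=> [? [? [? ?]]] ? ?; apply: (leafN 1814 1724 1933 3203 3525 2143); lra.
Qed.

Lemma nd79 (q r : R) : Bx (11 / 32) (3 / 8) (7 / 32) (1 / 4) q r -> r <= q -> 0 <= Hr 1 q r -> Phi 1 q r <= 146 / 10.
Proof.
move=> [? [? [? ?]]] ? ?; apply: (leafN 1816 1744 1956 3145 3376 2122); lra.
Qed.

Lemma nd75 (q r : R) : Bx (5 / 16) (3 / 8) (3 / 16) (1 / 4) q r -> r <= q -> 0 <= Hr 1 q r -> Phi 1 q r <= 146 / 10.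
Proof.
move=> hb hrq hH; case: (split4 (11 / 32) (7 / 32) hb) => [h|[h|[h|h]]]; [exact: (nd76 _ _ h hrq hH) | exact: (nd77 _ _ h hrq hH) | exact: (nd78 _ _ h hrq hH) | exact: (nd79 _ _ h hrq hH)].
Qed.

Lemma nd43 (q r : R) : Bx (1 / 4) (3 / 8) (1 / 8) (1 / 4) q r -> r <= q -> 0 <= Hr 1 q r -> Phi 1 q r <= 146 / 10.
Proof.
move=> hb hrq hH; case: (split4 (5 / 16) (3 / 16) hb) => [h|[h|[h|h]]]; [exact: (nd44 _ _ h hrq hH) | exact: (nd45 _ _ h hrq hH) | exact: (nd58 _ _ h hrq hH) | exact: (nd75 _ _ h hrq hH)].
Qed.

Lemma nd81 (q r : R) : Bx (3 / 8) (7 / 16) 0 (1 / 16) q r -> r <= q -> 0 <= Hr 1 q r -> Phi 1 q r <= 146 / 10.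
Proof.
move=> [? [? [? ?]]] ? hH; exfalso; apply: (heron_skip (q2:=(7 / 16)) (r2:=(1 / 16)) _ _ _ _ _ _ hH); lra.
Qed.

Lemma nd83 (q r : R) : Bx (3 / 8) (13 / 32) (1 / 16) (3 / 32) q r -> r <= q -> 0 <= Hr 1 q r -> Phi 1 q r <= 146 / 10.
Proof.
move=> [? [? [? ?]]] ? hH; exfalso; apply: (heron_skip (q2:=(13 / 32)) (r2:=(3 / 32)) _ _ _ _ _ _ hH); lra.
Qed.

Lemma nd84 (q r : R) : Bx (3 / 8) (13 / 32) (3 / 32) (1 / 8) q r -> r <= q -> 0 <= Hr 1 q r -> Phi 1 q r <= 146 / 10.
Proof.
move=> [? [? [? ?]]] ? hH; exfalso; apply: (heron_skip (q2:=(13 / 32)) (r2:=(1 / 8)) _ _ _ _ _ _ hH); lra.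
Qed.

Lemma nd85 (q r : R) : Bx (13 / 32) (7 / 16) (1 / 16) (3 / 32) q r -> r <= q -> 0 <= Hr 1 q r -> Phi 1 q r <= 146 / 10.
Proof.
move=> [? [? [? ?]]] ? hH; exfalso; apply: (heron_skip (q2:=(7 / 16)) (r2:=(3 / 32)) _ _ _ _ _ _ hH); lra.
Qed.

Lemma nd87 (q r : R) : Bx (13 / 32) (27 / 64) (3 / 32) (7 / 64) q r -> r <= q -> 0 <= Hr 1 q r -> Phi 1 q r <= 146 / 10.
Proof.
move=> [? [? [? ?]]] ? hH; exfalso; apply: (heron_skip (q2:=(27 / 64)) (r2:=(7 / 64)) _ _ _ _ _ _ hH); lra.
Qed.

Lemma nd88 (q r : R) : Bx (13 / 32) (27 / 64) (7 / 64) (1 / 8) q r -> r <= q -> 0 <= Hr 1 q r -> Phi 1 q r <= 146 / 10.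
Proof.
move=> [? [? [? ?]]] ? ?; apply: (leafN 1843 1670 1842 3124 3784 2249); lra.
Qed.

Lemma nd89 (q r : R) : Bx (27 / 64) (7 / 16) (3 / 32) (7 / 64) q r -> r <= q -> 0 <= Hr 1 q r -> Phi 1 q r <= 146 / 10.
Proof.
move=> [? [? [? ?]]] ? hH; exfalso; apply: (heron_skip (q2:=(7 / 16)) (r2:=(7 / 64)) _ _ _ _ _ _ hH); lra.
Qed.

Lemma nd90 (q r : R) : Bx (27 / 64) (7 / 16) (7 / 64) (1 / 8) q r -> r <= q -> 0 <= Hr 1 q r -> Phi 1 q r <= 146 / 10.
Proof.
move=> [? [? [? ?]]] ? ?; apply: (leafN 1854 1672 1838 3072 3727 2263); lra.
Qed.

Lemma nd86 (q r : R) : Bx (13 / 32) (7 / 16) (3 / 32) (1 / 8) q r -> r <= q -> 0 <= Hr 1 q r -> Phi 1 q r <= 146 / 10.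
Proof.
move=> hb hrq hH; case: (split4 (27 / 64) (7 / 64) hb) => [h|[h|[h|h]]]; [exact: (nd87 _ _ h hrq hH) | exact: (nd88 _ _ h hrq hH) | exact: (nd89 _ _ h hrq hH) | exact: (nd90 _ _ h hrq hH)].
Qed.

Lemma nd82 (q r : R) : Bx (3 / 8) (7 / 16) (1 / 16) (1 / 8) q r -> r <= q -> 0 <= Hr 1 q r -> Phi 1 q r <= 146 / 10.
Proof.
move=> hb hrq hH; case: (split4 (13 / 32) (3 / 32) hb) => [h|[h|[h|h]]]; [exact: (nd83 _ _ h hrq hH) | exact: (nd84 _ _ h hrq hH) | exact: (nd85 _ _ h hrq hH) | exact: (nd86 _ _ h hrq hH)].
Qed.

Lemma nd91 (q r : R) : Bx (7 / 16) (1 / 2) 0 (1 / 16) q r -> r <= q -> 0 <= Hr 1 q r -> Phi 1 q r <= 146 / 10.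
Proof.
move=> [? [? [? ?]]] ? hH; exfalso; apply: (heron_skip (q2:=(1 / 2)) (r2:=(1 / 16)) _ _ _ _ _ _ hH); lra.
Qed.

Lemma nd93 (q r : R) : Bx (7 / 16) (15 / 32) (1 / 16) (3 / 32) q r -> r <= q -> 0 <= Hr 1 q r -> Phi 1 q r <= 146 / 10.
Proof.
move=> [? [? [? ?]]] ? hH; exfalso; apply: (heron_skip (q2:=(15 / 32)) (r2:=(3 / 32)) _ _ _ _ _ _ hH); lra.
Qed.

Lemma nd94 (q r : R) : Bx (7 / 16) (15 / 32) (3 / 32) (1 / 8) q r -> r <= q -> 0 <= Hr 1 q r -> Phi 1 q r <= 146 / 10.
Proof.
move=> [? [? [? ?]]] ? ?; apply: (leafN 1876 1676 1833 3048 3772 2308); lra.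
Qed.

Lemma nd96 (q r : R) : Bx (15 / 32) (31 / 64) (1 / 16) (5 / 64) q r -> r <= q -> 0 <= Hr 1 q r -> Phi 1 q r <= 146 / 10.
Proof.
move=> [? [? [? ?]]] ? hH; exfalso; apply: (heron_skip (q2:=(31 / 64)) (r2:=(5 / 64)) _ _ _ _ _ _ hH); lra.
Qed.

Lemma nd97 (q r : R) : Bx (15 / 32) (31 / 64) (5 / 64) (3 / 32) q r -> r <= q -> 0 <= Hr 1 q r -> Phi 1 q r <= 146 / 10.
Proof.
move=> [? [? [? ?]]] ? ?; apply: (leafN 1887 1659 1803 2978 3761 2340); lra.
Qed.

Lemma nd98 (q r : R) : Bx (31 / 64) (1 / 2) (1 / 16) (5 / 64) q r -> r <= q -> 0 <= Hr 1 q r -> Phi 1 q r <= 146 / 10.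
Proof.
move=> [? [? [? ?]]] ? hH; exfalso; apply: (heron_skip (q2:=(1 / 2)) (r2:=(5 / 64)) _ _ _ _ _ _ hH); lra.
Qed.

Lemma nd99 (q r : R) : Bx (31 / 64) (1 / 2) (5 / 64) (3 / 32) q r -> r <= q -> 0 <= Hr 1 q r -> Phi 1 q r <= 146 / 10.
Proof.
move=> [? [? [? ?]]] ? ?; apply: (leafN 1898 1661 1799 2935 3707 2355); lra.
Qed.

Lemma nd95 (q r : R) : Bx (15 / 32) (1 / 2) (1 / 16) (3 / 32) q r -> r <= q -> 0 <= Hr 1 q r -> Phi 1 q r <= 146 / 10.
Proof.
move=> hb hrq hH; case: (split4 (31 / 64) (5 / 64) hb) => [h|[h|[h|h]]]; [exact: (nd96 _ _ h hrq hH) | exact: (nd97 _ _ h hrq hH) | exact: (nd98 _ _ h hrq hH) | exact: (nd99 _ _ h hrq hH)].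
Qed.

Lemma nd100 (q r : R) : Bx (15 / 32) (1 / 2) (3 / 32) (1 / 8) q r -> r <= q -> 0 <= Hr 1 q r -> Phi 1 q r <= 146 / 10.
Proof.
move=> [? [? [? ?]]] ? ?; apply: (leafN 1898 1680 1824 2956 3666 2338); lra.
Qed.

Lemma nd92 (q r : R) : Bx (7 / 16) (1 / 2) (1 / 16) (1 / 8) q r -> r <= q -> 0 <= Hr 1 q r -> Phi 1 q r <= 146 / 10.
Proof.
move=> hb hrq hH; case: (split4 (15 / 32) (3 / 32) hb) => [h|[h|[h|h]]]; [exact: (nd93 _ _ h hrq hH) | exact: (nd94 _ _ h hrq hH) | exact: (nd95 _ _ h hrq hH) | exact: (nd100 _ _ h hrq hH)].
Qed.

Lemma nd80 (q r : R) : Bx (3 / 8) (1 / 2) 0 (1 / 8) q r -> r <= q -> 0 <= Hr 1 q r -> Phi 1 q r <= 146 / 10.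
Proof.
move=> hb hrq hH; case: (split4 (7 / 16) (1 / 16) hb) => [h|[h|[h|h]]]; [exact: (nd81 _ _ h hrq hH) | exact: (nd82 _ _ h hrq hH) | exact: (nd91 _ _ h hrq hH) | exact: (nd92 _ _ h hrq hH)].
Qed.

Lemma nd104 (q r : R) : Bx (3 / 8) (25 / 64) (1 / 8) (9 / 64) q r -> r <= q -> 0 <= Hr 1 q r -> Phi 1 q r <= 146 / 10.
Proof.
move=> [? [? [? ?]]] ? ?; apply: (leafN 1821 1676 1864 3208 3795 2206); lra.
Qed.

Lemma nd105 (q r : R) : Bx (3 / 8) (25 / 64) (9 / 64) (5 / 32) q r -> r <= q -> 0 <= Hr 1 q r -> Phi 1 q r <= 146 / 10.
Proof.
move=> [? [? [? ?]]] ? ?; apply: (leafN 1822 1686 1875 3177 3694 2193); lra.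
Qed.

Lemma nd106 (q r : R) : Bx (25 / 64) (13 / 32) (1 / 8) (9 / 64) q r -> r <= q -> 0 <= Hr 1 q r -> Phi 1 q r <= 146 / 10.
Proof.
move=> [? [? [? ?]]] ? ?; apply: (leafN 1832 1678 1858 3150 3738 2220); lra.
Qed.

Lemma nd107 (q r : R) : Bx (25 / 64) (13 / 32) (9 / 64) (5 / 32) q r -> r <= q -> 0 <= Hr 1 q r -> Phi 1 q r <= 146 / 10.
Proof.
move=> [? [? [? ?]]] ? ?; apply: (leafN 1833 1688 1870 3122 3642 2207); lra.
Qed.

Lemma nd103 (q r : R) : Bx (3 / 8) (13 / 32) (1 / 8) (5 / 32) q r -> r <= q -> 0 <= Hr 1 q r -> Phi 1 q r <= 146 / 10.
Proof.
move=> hb hrq hH; case: (split4 (25 / 64) (9 / 64) hb) => [h|[h|[h|h]]]; [exact: (nd104 _ _ h hrq hH) | exact: (nd105 _ _ h hrq hH) | exact: (nd106 _ _ h hrq hH) | exact: (nd107 _ _ h hrq hH)].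
Qed.

Lemma nd108 (q r : R) : Bx (3 / 8) (13 / 32) (5 / 32) (3 / 16) q r -> r <= q -> 0 <= Hr 1 q r -> Phi 1 q r <= 146 / 10.
Proof.
move=> [? [? [? ?]]] ? ?; apply: (leafN 1834 1708 1898 3149 3602 2194); lra.
Qed.

Lemma nd109 (q r : R) : Bx (13 / 32) (7 / 16) (1 / 8) (5 / 32) q r -> r <= q -> 0 <= Hr 1 q r -> Phi 1 q r <= 146 / 10.
Proof.
move=> [? [? [? ?]]] ? ?; apply: (leafN 1855 1692 1865 3097 3684 2249); lra.
Qed.

Lemma nd110 (q r : R) : Bx (13 / 32) (7 / 16) (5 / 32) (3 / 16) q r -> r <= q -> 0 <= Hr 1 q r -> Phi 1 q r <= 146 / 10.
Proof.
move=> [? [? [? ?]]] ? ?; apply: (leafN 1856 1711 1887 3047 3512 2222); lra.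
Qed.

Lemma nd102 (q r : R) : Bx (3 / 8) (7 / 16) (1 / 8) (3 / 16) q r -> r <= q -> 0 <= Hr 1 q r -> Phi 1 q r <= 146 / 10.
Proof.
move=> hb hrq hH; case: (split4 (13 / 32) (5 / 32) hb) => [h|[h|[h|h]]]; [exact: (nd103 _ _ h hrq hH) | exact: (nd108 _ _ h hrq hH) | exact: (nd109 _ _ h hrq hH) | exact: (nd110 _ _ h hrq hH)].
Qed.

Lemma nd111 (q r : R) : Bx (3 / 8) (7 / 16) (3 / 16) (1 / 4) q r -> r <= q -> 0 <= Hr 1 q r -> Phi 1 q r <= 146 / 10.
Proof.
move=> [? [? [? ?]]] ? ?; apply: (leafN 1857 1749 1943 3095 3442 2197); lra.
Qed.

Lemma nd112 (q r : R) : Bx (7 / 16) (1 / 2) (1 / 8) (3 / 16) q r -> r <= q -> 0 <= Hr 1 q r -> Phi 1 q r <= 146 / 10.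
Proof.
move=> [? [? [? ?]]] ? ?; apply: (leafN 1898 1717 1876 3000 3586 2307); lra.
Qed.

Lemma nd113 (q r : R) : Bx (7 / 16) (1 / 2) (3 / 16) (1 / 4) q r -> r <= q -> 0 <= Hr 1 q r -> Phi 1 q r <= 146 / 10.
Proof.
move=> [? [? [? ?]]] ? ?; apply: (leafN 1898 1754 1919 2918 3300 2250); lra.
Qed.

Lemma nd101 (q r : R) : Bx (3 / 8) (1 / 2) (1 / 8) (1 / 4) q r -> r <= q -> 0 <= Hr 1 q r -> Phi 1 q r <= 146 / 10.
Proof.
move=> hb hrq hH; case: (split4 (7 / 16) (3 / 16) hb) => [h|[h|[h|h]]]; [exact: (nd102 _ _ h hrq hH) | exact: (nd111 _ _ h hrq hH) | exact: (nd112 _ _ h hrq hH) | exact: (nd113 _ _ h hrq hH)].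
Qed.

Lemma nd41 (q r : R) : Bx (1 / 4) (1 / 2) 0 (1 / 4) q r -> r <= q -> 0 <= Hr 1 q r -> Phi 1 q r <= 146 / 10.
Proof.
move=> hb hrq hH; case: (split4 (3 / 8) (1 / 8) hb) => [h|[h|[h|h]]]; [exact: (nd42 _ _ h hrq hH) | exact: (nd43 _ _ h hrq hH) | exact: (nd80 _ _ h hrq hH) | exact: (nd101 _ _ h hrq hH)].
Qed.

Lemma nd116 (q r : R) : Bx (1 / 4) (5 / 16) (1 / 4) (5 / 16) q r -> r <= q -> 0 <= Hr 1 q r -> Phi 1 q r <= 146 / 10.
Proof.
move=> [? [? [? ?]]] ? ?; apply: (leafN 1779 1779 2051 3465 3465 2051); lra.
Qed.

Lemma nd117 (q r : R) : Bx (1 / 4) (5 / 16) (5 / 16) (3 / 8) q r -> r <= q -> 0 <= Hr 1 q r -> Phi 1 q r <= 146 / 10.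
Proof.
move=> [? [? [? ?]]] ? ?; apply: (leafN 1783 1819 2102 3313 3199 2018); lra.
Qed.

Lemma nd118 (q r : R) : Bx (5 / 16) (3 / 8) (1 / 4) (5 / 16) q r -> r <= q -> 0 <= Hr 1 q r -> Phi 1 q r <= 146 / 10.
Proof.
move=> [? [? [? ?]]] ? ?; apply: (leafN 1819 1783 2018 3199 3313 2102); lra.
Qed.

Lemma nd119 (q r : R) : Bx (5 / 16) (3 / 8) (5 / 16) (3 / 8) q r -> r <= q -> 0 <= Hr 1 q r -> Phi 1 q r <= 146 / 10.
Proof.
move=> [? [? [? ?]]] ? ?; apply: (leafN 1821 1821 2065 3091 3091 2065); lra.
Qed.

Lemma nd115 (q r : R) : Bx (1 / 4) (3 / 8) (1 / 4) (3 / 8) q r -> r <= q -> 0 <= Hr 1 q r -> Phi 1 q r <= 146 / 10.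
Proof.
move=> hb hrq hH; case: (split4 (5 / 16) (5 / 16) hb) => [h|[h|[h|h]]]; [exact: (nd116 _ _ h hrq hH) | exact: (nd117 _ _ h hrq hH) | exact: (nd118 _ _ h hrq hH) | exact: (nd119 _ _ h hrq hH)].
Qed.

Lemma nd120 (q r : R) : Bx (1 / 4) (3 / 8) (3 / 8) (1 / 2) q r -> r <= q -> 0 <= Hr 1 q r -> Phi 1 q r <= 146 / 10.
Proof.
move=> [? [? [? ?]]] ? ?; apply: (leafN 1826 1898 2202 3190 3000 2033); lra.
Qed.

Lemma nd121 (q r : R) : Bx (3 / 8) (1 / 2) (1 / 4) (3 / 8) q r -> r <= q -> 0 <= Hr 1 q r -> Phi 1 q r <= 146 / 10.
Proof.
move=> [? [? [? ?]]] ? ?; apply: (leafN 1898 1826 2033 3000 3190 2202); lra.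
Qed.

Lemma nd122 (q r : R) : Bx (3 / 8) (1 / 2) (3 / 8) (1 / 2) q r -> r <= q -> 0 <= Hr 1 q r -> Phi 1 q r <= 146 / 10.
Proof.
move=> [? [? [? ?]]] ? ?; apply: (leafN 1898 1898 2122 2852 2852 2122); lra.
Qed.

Lemma nd114 (q r : R) : Bx (1 / 4) (1 / 2) (1 / 4) (1 / 2) q r -> r <= q -> 0 <= Hr 1 q r -> Phi 1 q r <= 146 / 10.
Proof.
move=> hb hrq hH; case: (split4 (3 / 8) (3 / 8) hb) => [h|[h|[h|h]]]; [exact: (nd115 _ _ h hrq hH) | exact: (nd120 _ _ h hrq hH) | exact: (nd121 _ _ h hrq hH) | exact: (nd122 _ _ h hrq hH)].
Qed.

Lemma nd2 (q r : R) : Bx 0 (1 / 2) 0 (1 / 2) q r -> r <= q -> 0 <= Hr 1 q r -> Phi 1 q r <= 146 / 10.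
Proof.
move=> hb hrq hH; case: (split4 (1 / 4) (1 / 4) hb) => [h|[h|[h|h]]]; [exact: (nd3 _ _ h hrq hH) | exact: (nd24 _ _ h hrq hH) | exact: (nd41 _ _ h hrq hH) | exact: (nd114 _ _ h hrq hH)].
Qed.

Lemma nd124 (q r : R) : Bx 0 (1 / 4) (1 / 2) (3 / 4) q r -> r <= q -> 0 <= Hr 1 q r -> Phi 1 q r <= 146 / 10.
Proof.
move=> [? [? [? ?]]] ? ?; lra.
Qed.

Lemma nd125 (q r : R) : Bx 0 (1 / 4) (3 / 4) 1 q r -> r <= q -> 0 <= Hr 1 q r -> Phi 1 q r <= 146 / 10.
Proof.
move=> [? [? [? ?]]] ? ?; lra.
Qed.

Lemma nd126 (q r : R) : Bx (1 / 4) (1 / 2) (1 / 2) (3 / 4) q r -> r <= q -> 0 <= Hr 1 q r -> Phi 1 q r <= 146 / 10.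
Proof.
move=> [? [? [? ?]]] ? ?; apply: (leafN 1898 2058 2400 3000 2723 2058); lra.
Qed.

Lemma nd127 (q r : R) : Bx (1 / 4) (1 / 2) (3 / 4) 1 q r -> r <= q -> 0 <= Hr 1 q r -> Phi 1 q r <= 146 / 10.
Proof.
move=> [? [? [? ?]]] ? ?; lra.
Qed.

Lemma nd123 (q r : R) : Bx 0 (1 / 2) (1 / 2) 1 q r -> r <= q -> 0 <= Hr 1 q r -> Phi 1 q r <= 146 / 10.
Proof.
move=> hb hrq hH; case: (split4 (1 / 4) (3 / 4) hb) => [h|[h|[h|h]]]; [exact: (nd124 _ _ h hrq hH) | exact: (nd125 _ _ h hrq hH) | exact: (nd126 _ _ h hrq hH) | exact: (nd127 _ _ h hrq hH)].
Qed.

Lemma nd132 (q r : R) : Bx (1 / 2) (17 / 32) 0 (1 / 32) q r -> r <= q -> 0 <= Hr 1 q r -> Phi 1 q r <= 146 / 10.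
Proof.
move=> [? [? [? ?]]] ? hH; exfalso; apply: (heron_skip (q2:=(17 / 32)) (r2:=(1 / 32)) _ _ _ _ _ _ hH); lra.
Qed.

Lemma nd133 (q r : R) : Bx (1 / 2) (17 / 32) (1 / 32) (1 / 16) q r -> r <= q -> 0 <= Hr 1 q r -> Phi 1 q r <= 146 / 10.
Proof.
move=> [? [? [? ?]]] ? hH; exfalso; apply: (heron_skip (q2:=(17 / 32)) (r2:=(1 / 16)) _ _ _ _ _ _ hH); lra.
Qed.

Lemma nd134 (q r : R) : Bx (17 / 32) (9 / 16) 0 (1 / 32) q r -> r <= q -> 0 <= Hr 1 q r -> Phi 1 q r <= 146 / 10.
Proof.
move=> [? [? [? ?]]] ? hH; exfalso; apply: (heron_skip (q2:=(9 / 16)) (r2:=(1 / 32)) _ _ _ _ _ _ hH); lra.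
Qed.

Lemma nd135 (q r : R) : Bx (17 / 32) (9 / 16) (1 / 32) (1 / 16) q r -> r <= q -> 0 <= Hr 1 q r -> Phi 1 q r <= 146 / 10.
Proof.
move=> [? [? [? ?]]] ? ?; apply: (leafN 1944 1650 1768 2874 3842 2474); lra.
Qed.

Lemma nd131 (q r : R) : Bx (1 / 2) (9 / 16) 0 (1 / 16) q r -> r <= q -> 0 <= Hr 1 q r -> Phi 1 q r <= 146 / 10.
Proof.
move=> hb hrq hH; case: (split4 (17 / 32) (1 / 32) hb) => [h|[h|[h|h]]]; [exact: (nd132 _ _ h hrq hH) | exact: (nd133 _ _ h hrq hH) | exact: (nd134 _ _ h hrq hH) | exact: (nd135 _ _ h hrq hH)].
Qed.

Lemma nd136 (q r : R) : Bx (1 / 2) (9 / 16) (1 / 16) (1 / 8) q r -> r <= q -> 0 <= Hr 1 q r -> Phi 1 q r <= 146 / 10.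
Proof.
move=> [? [? [? ?]]] ? ?; apply: (leafN 1943 1686 1816 2914 3750 2434); lra.
Qed.

Lemma nd138 (q r : R) : Bx (9 / 16) (19 / 32) 0 (1 / 32) q r -> r <= q -> 0 <= Hr 1 q r -> Phi 1 q r <= 146 / 10.
Proof.
move=> [? [? [? ?]]] ? hH; exfalso; apply: (heron_skip (q2:=(19 / 32)) (r2:=(1 / 32)) _ _ _ _ _ _ hH); lra.
Qed.

Lemma nd139 (q r : R) : Bx (9 / 16) (19 / 32) (1 / 32) (1 / 16) q r -> r <= q -> 0 <= Hr 1 q r -> Phi 1 q r <= 146 / 10.
Proof.
move=> [? [? [? ?]]] ? ?; apply: (leafN 1967 1654 1761 2802 3730 2507); lra.
Qed.

Lemma nd140 (q r : R) : Bx (19 / 32) (5 / 8) 0 (1 / 32) q r -> r <= q -> 0 <= Hr 1 q r -> Phi 1 q r <= 146 / 10.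
Proof.
move=> [? [? [? ?]]] ? hH; exfalso; apply: (heron_skip (q2:=(5 / 8)) (r2:=(1 / 32)) _ _ _ _ _ _ hH); lra.
Qed.

Lemma nd141 (q r : R) : Bx (19 / 32) (5 / 8) (1 / 32) (1 / 16) q r -> r <= q -> 0 <= Hr 1 q r -> Phi 1 q r <= 146 / 10.
Proof.
move=> [? [? [? ?]]] ? ?; apply: (leafN 1990 1658 1755 2737 3631 2539); lra.
Qed.

Lemma nd137 (q r : R) : Bx (9 / 16) (5 / 8) 0 (1 / 16) q r -> r <= q -> 0 <= Hr 1 q r -> Phi 1 q r <= 146 / 10.
Proof.
move=> hb hrq hH; case: (split4 (19 / 32) (1 / 32) hb) => [h|[h|[h|h]]]; [exact: (nd138 _ _ h hrq hH) | exact: (nd139 _ _ h hrq hH) | exact: (nd140 _ _ h hrq hH) | exact: (nd141 _ _ h hrq hH)].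
Qed.

Lemma nd142 (q r : R) : Bx (9 / 16) (5 / 8) (1 / 16) (1 / 8) q r -> r <= q -> 0 <= Hr 1 q r -> Phi 1 q r <= 146 / 10.
Proof.
move=> [? [? [? ?]]] ? ?; apply: (leafN 1988 1693 1800 2770 3557 2497); lra.
Qed.

Lemma nd130 (q r : R) : Bx (1 / 2) (5 / 8) 0 (1 / 8) q r -> r <= q -> 0 <= Hr 1 q r -> Phi 1 q r <= 146 / 10.
Proof.
move=> hb hrq hH; case: (split4 (9 / 16) (1 / 16) hb) => [h|[h|[h|h]]]; [exact: (nd131 _ _ h hrq hH) | exact: (nd136 _ _ h hrq hH) | exact: (nd137 _ _ h hrq hH) | exact: (nd142 _ _ h hrq hH)].
Qed.

Lemma nd143 (q r : R) : Bx (1 / 2) (5 / 8) (1 / 8) (1 / 4) q r -> r <= q -> 0 <= Hr 1 q r -> Phi 1 q r <= 146 / 10.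
Proof.
move=> [? [? [? ?]]] ? ?; apply: (leafN 1985 1762 1898 2841 3421 2421); lra.
Qed.

Lemma nd145 (q r : R) : Bx (5 / 8) (11 / 16) 0 (1 / 16) q r -> r <= q -> 0 <= Hr 1 q r -> Phi 1 q r <= 146 / 10.
Proof.
move=> [? [? [? ?]]] ? ?; apply: (leafN 2039 1665 1749 2705 3711 2654); lra.
Qed.

Lemma nd146 (q r : R) : Bx (5 / 8) (11 / 16) (1 / 16) (1 / 8) q r -> r <= q -> 0 <= Hr 1 q r -> Phi 1 q r <= 146 / 10.
Proof.
move=> [? [? [? ?]]] ? ?; apply: (leafN 2033 1699 1787 2654 3402 2559); lra.
Qed.

Lemma nd147 (q r : R) : Bx (11 / 16) (3 / 4) 0 (1 / 16) q r -> r <= q -> 0 <= Hr 1 q r -> Phi 1 q r <= 146 / 10.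
Proof.
move=> [? [? [? ?]]] ? ?; apply: (leafN 2085 1671 1738 2599 3531 2723); lra.
Qed.

Lemma nd148 (q r : R) : Bx (11 / 16) (3 / 4) (1 / 16) (1 / 8) q r -> r <= q -> 0 <= Hr 1 q r -> Phi 1 q r <= 146 / 10.
Proof.
move=> [? [? [? ?]]] ? ?; apply: (leafN 2078 1704 1774 2559 3275 2621); lra.
Qed.

Lemma nd144 (q r : R) : Bx (5 / 8) (3 / 4) 0 (1 / 8) q r -> r <= q -> 0 <= Hr 1 q r -> Phi 1 q r <= 146 / 10.
Proof.
move=> hb hrq hH; case: (split4 (11 / 16) (1 / 16) hb) => [h|[h|[h|h]]]; [exact: (nd145 _ _ h hrq hH) | exact: (nd146 _ _ h hrq hH) | exact: (nd147 _ _ h hrq hH) | exact: (nd148 _ _ h hrq hH)].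
Qed.

Lemma nd149 (q r : R) : Bx (5 / 8) (3 / 4) (1 / 8) (1 / 4) q r -> r <= q -> 0 <= Hr 1 q r -> Phi 1 q r <= 146 / 10.
Proof.
move=> [? [? [? ?]]] ? ?; apply: (leafN 2071 1770 1861 2610 3175 2536); lra.
Qed.

Lemma nd129 (q r : R) : Bx (1 / 2) (3 / 4) 0 (1 / 4) q r -> r <= q -> 0 <= Hr 1 q r -> Phi 1 q r <= 146 / 10.
Proof.
move=> hb hrq hH; case: (split4 (5 / 8) (1 / 8) hb) => [h|[h|[h|h]]]; [exact: (nd130 _ _ h hrq hH) | exact: (nd143 _ _ h hrq hH) | exact: (nd144 _ _ h hrq hH) | exact: (nd149 _ _ h hrq hH)].
Qed.

Lemma nd150 (q r : R) : Bx (1 / 2) (3 / 4) (1 / 4) (1 / 2) q r -> r <= q -> 0 <= Hr 1 q r -> Phi 1 q r <= 146 / 10.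
Proof.
move=> [? [? [? ?]]] ? ?; apply: (leafN 2058 1898 2058 2723 3000 2400); lra.
Qed.

Lemma nd152 (q r : R) : Bx (3 / 4) (7 / 8) 0 (1 / 8) q r -> r <= q -> 0 <= Hr 1 q r -> Phi 1 q r <= 146 / 10.
Proof.
move=> [? [? [? ?]]] ? ?; apply: (leafN 2177 1715 1762 2510 3385 2861); lra.
Qed.

Lemma nd153 (q r : R) : Bx (3 / 4) (7 / 8) (1 / 8) (1 / 4) q r -> r <= q -> 0 <= Hr 1 q r -> Phi 1 q r <= 146 / 10.
Proof.
move=> [? [? [? ?]]] ? ?; apply: (leafN 2156 1777 1830 2450 3000 2651); lra.
Qed.

Lemma nd154 (q r : R) : Bx (7 / 8) 1 0 (1 / 8) q r -> r <= q -> 0 <= Hr 1 q r -> Phi 1 q r <= 146 / 10.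
Proof.
move=> [? [? [? ?]]] ? ?; apply: (leafN 2268 1724 1742 2372 3163 3000); lra.
Qed.

Lemma nd155 (q r : R) : Bx (7 / 8) 1 (1 / 8) (1 / 4) q r -> r <= q -> 0 <= Hr 1 q r -> Phi 1 q r <= 146 / 10.
Proof.
move=> [? [? [? ?]]] ? ?; apply: (leafN 2240 1783 1805 2332 2869 2766); lra.
Qed.

Lemma nd151 (q r : R) : Bx (3 / 4) 1 0 (1 / 4) q r -> r <= q -> 0 <= Hr 1 q r -> Phi 1 q r <= 146 / 10.
Proof.
move=> hb hrq hH; case: (split4 (7 / 8) (1 / 8) hb) => [h|[h|[h|h]]]; [exact: (nd152 _ _ h hrq hH) | exact: (nd153 _ _ h hrq hH) | exact: (nd154 _ _ h hrq hH) | exact: (nd155 _ _ h hrq hH)].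
Qed.

Lemma nd156 (q r : R) : Bx (3 / 4) 1 (1 / 4) (1 / 2) q r -> r <= q -> 0 <= Hr 1 q r -> Phi 1 q r <= 146 / 10.
Proof.
move=> [? [? [? ?]]] ? ?; apply: (leafN 2216 1898 1964 2400 2753 2599); lra.
Qed.

Lemma nd128 (q r : R) : Bx (1 / 2) 1 0 (1 / 2) q r -> r <= q -> 0 <= Hr 1 q r -> Phi 1 q r <= 146 / 10.
Proof.
move=> hb hrq hH; case: (split4 (3 / 4) (1 / 4) hb) => [h|[h|[h|h]]]; [exact: (nd129 _ _ h hrq hH) | exact: (nd150 _ _ h hrq hH) | exact: (nd151 _ _ h hrq hH) | exact: (nd156 _ _ h hrq hH)].
Qed.

Lemma nd157 (q r : R) : Bx (1 / 2) 1 (1 / 2) 1 q r -> r <= q -> 0 <= Hr 1 q r -> Phi 1 q r <= 146 / 10.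
Proof.
move=> [? [? [? ?]]] ? ?; apply: (leafN 2177 2177 2372 2559 2559 2372); lra.
Qed.

Lemma nd1 (q r : R) : Bx 0 1 0 1 q r -> r <= q -> 0 <= Hr 1 q r -> Phi 1 q r <= 146 / 10.
Proof.
move=> hb hrq hH; case: (split4 (1 / 2) (1 / 2) hb) => [h|[h|[h|h]]]; [exact: (nd2 _ _ h hrq hH) | exact: (nd123 _ _ h hrq hH) | exact: (nd128 _ _ h hrq hH) | exact: (nd157 _ _ h hrq hH)].
Qed.

Lemma keyN (q r : R) : 0 <= r -> r <= q -> q <= 1 -> 0 <= Hr 1 q r -> Phi 1 q r <= 146 / 10.
Proof.
move=> h0 h1 h2 hH; apply: (nd1 _ _ _ h1 hH); rewrite /Bx; lra.
Qed.

Lemma Tm_scale (l S L : R) : l != 0 -> Tm (l * S) (l * L) = Tm S L.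
Proof.
move=> hl; rewrite /Tm; congr Num.sqrt.
by rewrite invfM mulrA -(mulrA 36) (mulrC l) -!mulrA (mulrA l) mulfV // mul1r.
Qed.

Lemma keyO (p q r : R) : 0 < p -> 0 <= r -> r <= q -> q <= p -> 0 <= Hr p q r ->
  Phi p q r <= 146 / 10.
Proof.
move=> hp h0 h1 h2 hH.
have pn : p != 0 by rewrite gt_eqF.
have E : forall S L S' L', S = p * S' -> L = p * L' -> Tm S L = Tm S' L'.
  by move=> S L S' L' -> ->; apply: Tm_scale.
have -> : Phi p q r = Phi 1 (q / p) (r / p).
  rewrite /Phi; congr (_ + _ + _ + _ + _ + _); apply: E; by field.
apply: keyN.
- by apply: divr_ge0 => //; apply: ltW.
- by rewrite ler_pM2r // invr_gt0.
- by rewrite ler_pdivrMr // mul1r.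
- have -> : Hr 1 (q / p) (r / p) = Hr p q r / p ^+ 2 by rewrite /Hr; field.
  by apply: divr_ge0 => //; apply: sqr_ge0.
Qed.

Lemma Phi_swap (p q r : R) : Phi p r q = Phi p q r.
Proof.
rewrite /Phi.
have -> : p + r + q = p + q + r by ring.
have -> : 16 * p - 2 * r + 10 * q = 16 * p + 10 * q - 2 * r by ring.
have -> : 16 * p + 10 * r - 2 * q = 16 * p - 2 * q + 10 * r by ring.
lra.
Qed.

Lemma Phi_cyc (p q r : R) : Phi q r p = Phi p q r.
Proof.
rewrite /Phi.
have -> : q + r + p = p + q + r by ring.
have -> : 16 * q - 2 * r + 10 * p = 16 * q + 10 * p - 2 * r by ring.
have -> : 16 * p + 10 * r - 2 * q = 16 * p - 2 * q + 10 * r by ring.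
lra.
Qed.

Lemma key (p q r : R) : 0 <= p -> 0 <= q -> 0 <= r -> 0 < p + q + r -> 0 <= Hr p q r ->
  Phi p q r <= 146 / 10.
Proof.
move=> hp hq hr hs hH.
have Hs1 : Hr p r q = Hr p q r by rewrite /Hr; ring.
have Hc1 : Hr q r p = Hr p q r by rewrite /Hr; ring.
have Hc2 : Hr r p q = Hr p q r by rewrite /Hr; ring.
have Hs2 : Hr q p r = Hr p q r by rewrite /Hr; ring.
have Hs3 : Hr r q p = Hr p q r by rewrite /Hr; ring.
case: (leP q p) => a; case: (leP r q) => b; case: (leP r p) => c.
- by apply: keyO => //; lra.
- lra.
- by rewrite -Phi_swap; apply: keyO; rewrite ?Hs1 //; lra.
- by rewrite -Phi_cyc -Phi_cyc; apply: keyO; rewrite ?Hc2 //; lra.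
- by rewrite -Phi_cyc -Phi_swap; apply: keyO; rewrite ?Hs2 //; lra.
- by rewrite -Phi_cyc; apply: keyO; rewrite ?Hc1 //; lra.
- lra.
- by rewrite -Phi_cyc -Phi_cyc -Phi_swap; apply: keyO; rewrite ?Hs3 //; lra.
Qed.

Definition sqd (P Q : Defs.point R) : R := (P.1-Q.1)^+2 + (P.2-Q.2)^+2.
Definition pp (t : triangle R) := sqd (vA t) (vB t).
Definition qq (t : triangle R) := sqd (vB t) (vC t).
Definition rr (t : triangle R) := sqd (vC t) (vA t).
Definition SS t := pp t + qq t + rr t.
Definition cr (t : triangle R) := ((vB t).1 - (vA t).1) * ((vC t).2 - (vA t).2)
   - ((vB t).2 - (vA t).2) * ((vC t).1 - (vA t).1).
Definition Lk (k : nat) (p q r : R) : R :=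
  match k with
  | 0 => 16 * p - 2 * q + 10 * r | 1 => 16 * p + 10 * q - 2 * r
  | 2 => 16 * q + 10 * p - 2 * r | 3 => 16 * q + 10 * r - 2 * p
  | 4 => 16 * r + 10 * q - 2 * p | _ => 16 * r + 10 * p - 2 * q end.

Lemma SS_child (k : 'I_6) t : 36 * SS (subdiv_child k t) = Lk k (pp t) (qq t) (rr t).
Proof.
case: t => [[[a1 a2] [b1 b2]] [c1 c2]].
case: k => [[|[|[|[|[|[|k]]]]]] hk] //=;
rewrite /SS /pp /qq /rr /sqd /subdiv_child /vA /vB /vC /midpoint /barycenter /pscale /padd /=;
field; rewrite ?pnatr_eq0 ?oner_eq0 //=.
Qed.

Lemma cr_child (k : 'I_6) t : (cr (subdiv_child k t))^+2 = (cr t)^+2 / 36.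
Proof.
case: t => [[[a1 a2] [b1 b2]] [c1 c2]].
case: k => [[|[|[|[|[|[|k]]]]]] hk] //=;
rewrite /cr /subdiv_child /vA /vB /vC /midpoint /barycenter /pscale /padd /=;
field; rewrite ?pnatr_eq0 ?oner_eq0 //=.
Qed.
Lemma perm3 (a b c : R) :
  let L := Num.max a (Num.max b c) in let Sm := Num.min a (Num.min b c) in
  let M := a + b + c - L - Sm in
  Hr (L^+2) (Sm^+2) (M^+2) = Hr (a^+2) (b^+2) (c^+2) /\ a <= L /\ b <= L /\ c <= L.
Proof.
rewrite /=.
case: (leP a b) => hab; case: (leP b c) => hbc; case: (leP a c) => hac;
rewrite /Num.max /Num.min /=;
repeat (match goal with |- context [ (?x < ?y)%R ] => case: (ltP x y) => ? end);
  (split; [rewrite /Hr; ring | lra]) || lra.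
Qed.

Lemma sqd_ge0 P Q : 0 <= sqd P Q.
Proof. by rewrite /sqd addr_ge0 // sqr_ge0. Qed.

Lemma Hr_cr t : Hr (pp t) (qq t) (rr t) = 4 * cr t ^+ 2.
Proof.
case: t => [[[a1 a2] [b1 b2]] [c1 c2]].
rewrite /Hr /pp /qq /rr /cr /sqd /vA /vB /vC /=; ring.
Qed.

Lemma aux9 (u A B : R) : 0 <= u -> 0 < A -> 0 < B -> B <= 9 * A ->
  4 * u / (4 * A) <= 3 ^+ 2 * u / B.
Proof.
move=> hu hA hB hBA.
rewrite -subr_ge0.
have -> : 3 ^+ 2 * u / B - 4 * u / (4 * A) = u * (9 * A - B) / (A * B).
  by field; rewrite ?pnatr_eq0 ?lt0r_neq0.
by apply: divr_ge0; [apply: mulr_ge0 => //; lra | apply: mulr_ge0; lra].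
Qed.

Lemma char_y_le t : 0 < SS t -> char_y t <= 3 * `|cr t| / SS t.
Proof.
move=> hS.
have ha : dist (vA t) (vB t) ^+ 2 = pp t by rewrite /dist sqr_sqrtr // -/(sqd _ _) sqd_ge0.
have hb : dist (vB t) (vC t) ^+ 2 = qq t by rewrite /dist sqr_sqrtr // -/(sqd _ _) sqd_ge0.
have hc : dist (vC t) (vA t) ^+ 2 = rr t by rewrite /dist sqr_sqrtr // -/(sqd _ _) sqd_ge0.
have a0 : 0 <= dist (vA t) (vB t) by rewrite sqrtr_ge0.
have b0 : 0 <= dist (vB t) (vC t) by rewrite sqrtr_ge0.
have c0 : 0 <= dist (vC t) (vA t) by rewrite sqrtr_ge0.
have [hH [hLa [hLb hLc]]] := perm3 (dist (vA t) (vB t)) (dist (vB t) (vC t)) (dist (vC t) (vA t)).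
rewrite /char_y /char_x /side_mid.
set L := side_long t.
have -> : side_short t = Num.min (dist (vA t) (vB t)) (Num.min (dist (vB t) (vC t)) (dist (vC t) (vA t))) by [].
set a := dist (vA t) (vB t) in ha a0 hH hLa *.
set b := dist (vB t) (vC t) in hb b0 hH hLb *.
set c := dist (vC t) (vA t) in hc c0 hH hLc *.
set Sm := Num.min a (Num.min b c) in hH *.
have hL : L = Num.max a (Num.max b c) by [].
rewrite -hL in hH hLa hLb hLc.
rewrite ha hb hc Hr_cr in hH.
move: (a + b + c - L - Sm) hH => M hH.
have L0 : 0 <= L by apply: le_trans hLa.
have L2 : SS t <= 3 * L^+2.
  rewrite /SS -ha -hb -hc.
  have h1 : a^+2 <= L^+2 by rewrite ler_sqr ?nnegrE.
  have h2 : b^+2 <= L^+2 by rewrite ler_sqr ?nnegrE.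
  have h3 : c^+2 <= L^+2 by rewrite ler_sqr ?nnegrE.
  lra.
have Lp : 0 < L^+2 by lra.
have LN : L != 0 by apply/eqP => h; rewrite h expr0n /= in Lp; lra.
have -> : (Sm / L) ^+ 2 - ((L ^+ 2 + Sm ^+ 2 - M ^+ 2) / (2 * L ^+ 2)) ^+ 2
   = Hr (L^+2) (Sm^+2) (M^+2) / (4 * (L^+2)^+2).
  by rewrite /Hr; field.
rewrite hH.
have -> : 3 * `|cr t| / SS t = Num.sqrt ((3 * cr t / SS t) ^+ 2).
  by rewrite sqrtr_sqr !normrM (ger0_norm (_ : (0:R) <= 3)) // (gtr0_norm (_ : 0 < (SS t)^-1)) // invr_gt0.
apply: ler_wsqrtr.
rewrite expr_div_n exprMn.
have hS2 : 0 < SS t ^+ 2 by rewrite exprn_gt0.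
have hA : 0 < (L^+2)^+2 by rewrite exprn_gt0.
have : SS t ^+ 2 <= 9 * (L^+2)^+2.
  have h : SS t ^+2 <= (3 * L^+2)^+2 by rewrite ler_sqr ?nnegrE; lra.
  by rewrite exprMn in h; lra.
move=> h; have := @aux9 _ _ _ (sqr_ge0 (cr t)) hA hS2 h.
by move=> H; rewrite exprMn; rewrite [(L ^+ 2) ^+ 2]expr2 in H.
Qed.


Lemma tri_ineq t : qq t <= 2 * (pp t + rr t) /\ pp t <= 2 * (qq t + rr t) /\ rr t <= 2 * (pp t + qq t).
Proof.
case: t => [[[a1 a2] [b1 b2]] [c1 c2]].
rewrite /pp /qq /rr /sqd /vA /vB /vC /=.
have e1 : 2 * ((a1 - b1) ^+ 2 + (a2 - b2) ^+ 2 + ((c1 - a1) ^+ 2 + (c2 - a2) ^+ 2)) - ((b1 - c1) ^+ 2 + (b2 - c2) ^+ 2)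
  = (b1 + c1 - 2 * a1) ^+ 2 + (b2 + c2 - 2 * a2) ^+ 2 by ring.
have e2 : 2 * ((b1 - c1) ^+ 2 + (b2 - c2) ^+ 2 + ((c1 - a1) ^+ 2 + (c2 - a2) ^+ 2)) - ((a1 - b1) ^+ 2 + (a2 - b2) ^+ 2)
  = (a1 + b1 - 2 * c1) ^+ 2 + (a2 + b2 - 2 * c2) ^+ 2 by ring.
have e3 : 2 * ((a1 - b1) ^+ 2 + (a2 - b2) ^+ 2 + ((b1 - c1) ^+ 2 + (b2 - c2) ^+ 2)) - ((c1 - a1) ^+ 2 + (c2 - a2) ^+ 2)
  = (a1 + c1 - 2 * b1) ^+ 2 + (a2 + c2 - 2 * b2) ^+ 2 by ring.
have s1 := sqr_ge0 (b1 + c1 - 2 * a1); have s2 := sqr_ge0 (b2 + c2 - 2 * a2).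
have s3 := sqr_ge0 (a1 + b1 - 2 * c1); have s4 := sqr_ge0 (a2 + b2 - 2 * c2).
have s5 := sqr_ge0 (a1 + c1 - 2 * b1); have s6 := sqr_ge0 (a2 + c2 - 2 * b2).
split; [|split]; lra.
Qed.

Lemma Lk_pos t (k : 'I_6) : 0 < SS t -> 0 < Lk k (pp t) (qq t) (rr t).
Proof.
move=> hS; have [h1 [h2 h3]] := tri_ineq t.
have p0 := sqd_ge0 (vA t) (vB t); have q0 := sqd_ge0 (vB t) (vC t); have r0 := sqd_ge0 (vC t) (vA t).
rewrite /SS in hS; rewrite -/(pp t) -/(qq t) -/(rr t) in p0 q0 r0.
by case: k => [[|[|[|[|[|[|k]]]]]] hk] //=; lra.
Qed.

Lemma SS_child_pos t (k : 'I_6) : 0 < SS t -> 0 < SS (subdiv_child k t).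
Proof.
move=> hS; have := Lk_pos t k hS; rewrite -SS_child => h.
by rewrite -(pmulr_rgt0 _ (_ : (0:R) < 36)) //; apply: ltr0n.
Qed.

Definition gg t := Num.sqrt ((SS t)^-1).

Lemma sum_child t : 0 < SS t -> \sum_(k < 6) gg (subdiv_child k t) <= 146 / 10 * gg t.
Proof.
move=> hS.
have p0 := sqd_ge0 (vA t) (vB t); have q0 := sqd_ge0 (vB t) (vC t); have r0 := sqd_ge0 (vC t) (vA t).
rewrite -/(pp t) -/(qq t) -/(rr t) in p0 q0 r0.
have hH : 0 <= Hr (pp t) (qq t) (rr t) by rewrite Hr_cr mulr_ge0 // sqr_ge0.
have hK := key _ _ _ p0 q0 r0 hS hH.
have E : forall k : 'I_6, gg (subdiv_child k t) = Num.sqrt ((Lk k (pp t) (qq t) (rr t) / 36)^-1).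
  by move=> k; rewrite /gg -SS_child mulrAC divff ?mul1r // pnatr_eq0.
have F : forall L, Tm (pp t + qq t + rr t) L = Num.sqrt (SS t) * Num.sqrt ((L / 36)^-1).
  move=> L; rewrite /Tm -sqrtrM; last exact: ltW.
  by congr Num.sqrt; rewrite invf_div /SS mulrCA mulrA.
have G : Num.sqrt (SS t) * gg t = 1.
  by rewrite /gg -sqrtrM ?mulfV ?sqrtr1 // ?gt_eqF // ltW.
have sp : 0 < Num.sqrt (SS t) by rewrite sqrtr_gt0.
rewrite !big_ord_recr big_ord0 /= !E /=.
rewrite /Phi !F in hK.
rewrite -(ler_pM2l sp) mulrA (mulrC _ (146 / 10)) -mulrA G mulr1.
rewrite /Lk /= in hK |- *.
lra.
Qed.

Definition app (t : triangle R) (s : seq 'I_6) : triangle R :=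
  foldl (fun t k => subdiv_child k t) t s.

Fixpoint allseq (n : nat) : seq (seq 'I_6) :=
  if n is m.+1 then [seq k :: s | k <- enum 'I_6, s <- allseq m] else [:: [::]].

Lemma allseqP n s : size s = n -> s \in allseq n.
Proof.
elim: n s => [|n IH] [|k s] //= [hs].
by apply: allpairs_f; [rewrite mem_enum | exact: IH].
Qed.

Lemma sum_allseq n t : 0 < SS t ->
  \sum_(s <- allseq n) gg (app t s) <= (146 / 10) ^+ n * gg t.
Proof.
elim: n t => [|n IH] t hS /=.
  by rewrite big_seq1 expr0 mul1r.
rewrite big_allpairs_dep /=.
apply: (@le_trans _ _ (\sum_(k <- enum 'I_6) (146 / 10) ^+ n * gg (subdiv_child k t))).
  by apply: ler_sum => k _; apply: IH; apply: SS_child_pos.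
rewrite -mulr_sumr exprSr -mulrA ler_pM2l; last first.
  by apply: exprn_gt0; apply: divr_gt0; apply: ltr0n.
rewrite big_enum /=.
have := sum_child t hS.
suff -> : \sum_(k in 'I_6) gg (subdiv_child k t) = \sum_(k < 6) gg (subdiv_child k t) by [].
by apply: eq_bigl => k; rewrite inE.
Qed.

Definition sw {T : Type} (c : nat -> T -> 'I_6) (w : T) (n : nat) : seq 'I_6 :=
  [seq c i w | i <- iota 0 n].

Lemma chain_app (T : Type) (T0 : triangle R) (c : nat -> T -> 'I_6) w n :
  tri_chain T0 c w n = app T0 (sw c w n).
Proof.
elim: n => [|n IH] //.
rewrite [tri_chain _ _ _ _]/= IH /sw -[n.+1]addn1 iotaD map_cat cats1 /app foldl_rcons.
by [].
Qed.

Definition Cyl {T : Type} (c : nat -> T -> 'I_6) (l : seq nat) (f : nat -> 'I_6) : set T :=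
  [set w | forall i, i \in l -> c i w = f i].

Lemma Cyl_meas (d : measure_display) (T : measurableType d) (c : nat -> T -> 'I_6) l f :
  (forall n k, measurable [set w | c n w = k]) -> measurable (Cyl c l f).
Proof.
move=> hm; elim: l => [|i l IH].
  have -> : Cyl c [::] f = setT by apply/seteqP; split => w //= _ i; rewrite in_nil.
  exact: measurableT.
have -> : Cyl c (i :: l) f = [set w | c i w = f i] `&` Cyl c l f.
  apply/seteqP; split => w /=.
  - move=> h; split; first by apply: h; rewrite mem_head.
    by move=> j hj; apply: h; rewrite in_cons hj orbT.
  - by move=> [h1 h2] j; rewrite in_cons => /orP [/eqP -> // | /h2].
exact: measurableI.
Qed.

Definition cyl {T : Type} (c : nat -> T -> 'I_6) (n : nat) (s : seq 'I_6) : set T :=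
  Cyl c (iota 0 n) (fun i => nth ord0 s i).

Lemma in_cyl (T : Type) (c : nat -> T -> 'I_6) w n : cyl c n (sw c w n) w.
Proof.
move=> i; rewrite mem_iota add0n => /andP [_ hi].
by rewrite /sw (nth_map 0) ?size_iota // nth_iota.
Qed.

Definition BU {T : Type} (c : nat -> T -> 'I_6) (n : nat) (l : seq (seq 'I_6)) (pr : pred (seq 'I_6)) : set T :=
  \big[setU/set0]_(s <- l | pr s) cyl c n s.

Lemma BU_meas (d : measure_display) (T : measurableType d) (c : nat -> T -> 'I_6) n l pr :
  (forall n k, measurable [set w | c n w = k]) -> measurable (BU c n l pr).
Proof.
move=> hm; rewrite /BU; elim: l => [|s l IH]; first by rewrite big_nil.
rewrite big_cons; case: ifP => _ //.
by apply: measurableU => //; apply: Cyl_meas.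
Qed.

Lemma in_BU (T : Type) (c : nat -> T -> 'I_6) n l (pr : pred (seq 'I_6)) s w :
  s \in l -> pr s -> cyl c n s w -> BU c n l pr w.
Proof.
rewrite /BU; elim: l => [|s' l IH] //.
rewrite in_cons big_cons => /orP [/eqP <- | hl] hp hw.
  by rewrite hp; left.
by case: ifP => _; [right|]; apply: IH.
Qed.

Lemma BU_le (d : measure_display) (T : measurableType d) (P : probability T R)
  (c : nat -> T -> 'I_6) n l pr :
  (forall n k, measurable [set w | c n w = k]) ->
  (P (BU c n l pr) <= \sum_(s <- l | pr s) P (cyl c n s))%E.
Proof.
move=> hm; rewrite /BU; elim: l => [|s l IH]; first by rewrite !big_nil measure0.
rewrite !big_cons; case: ifP => _ //.
apply: le_trans (measureU2 _ _ _) _.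
- exact: Cyl_meas.
- exact: (@BU_meas d T c n l pr hm).
by apply: leeD2l.
Qed.

Lemma pow_eq (k g a : R) n : ((6 : R)^-1) ^+ n * (k ^+ n * g / a ^+ n) = g * (k / (6 * a)) ^+ n.
Proof. rewrite invfM exprMn exprMn !exprVn; ring. Qed.

Lemma PU_le (d : measure_display) (T : measurableType d) (P : probability T R)
  (c : nat -> T -> 'I_6) (hc : iid_uniform6 P c) (T0 : triangle R) (hS : 0 < SS T0) (a : R) n :
  0 < a ->
  (P (BU c n (allseq n) (fun s => (a ^+ n < gg (app T0 s))%R)) <=
     (gg T0 * ((146 / 10) / (6 * a)) ^+ n)%:E)%E.
Proof.
move=> ha.
apply: le_trans (@BU_le d T P c n (allseq n) _ hc.1) _.
have e : forall s, P (cyl c n s) = (((6%:R : R)^-1) ^+ n)%:E.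
  move=> s; have := hc.2 (iota 0 n) (fun i => nth ord0 s i) (iota_uniq 0 n).
  by rewrite size_iota.
under eq_bigr do rewrite e.
rewrite sumEFin lee_fin.
set x := ((6%:R : R)^-1) ^+ n.
have x0 : 0 <= x by apply: exprn_ge0; rewrite invr_ge0; apply: ler0n.
have an : 0 < a ^+ n by apply: exprn_gt0.
apply: (@le_trans _ _ (\sum_(s <- allseq n) x * (gg (app T0 s) / a ^+ n))).
  rewrite big_mkcond /=; apply: ler_sum => s _; case: ifP => h.
    by rewrite ler_peMr // ler_pdivlMr // mul1r ltW.
  by apply: mulr_ge0 => //; apply: divr_ge0; [apply: sqrtr_ge0 | apply: ltW].
rewrite -mulr_sumr -mulr_suml.
apply: (@le_trans _ _ (x * ((146 / 10) ^+ n * gg T0 / a ^+ n))).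
  rewrite ler_pM2l ?ler_pM2r ?invr_gt0 //; last first.
    by apply: exprn_gt0; rewrite invr_gt0; apply: ltr0n.
  exact: sum_allseq.
rewrite le_eqVlt; apply/orP; left; apply/eqP.
by rewrite /x pow_eq.
Qed.

Lemma geo_fin (K th : R) : 0 <= th < 1 -> (\sum_(n <oo) (K * th ^+ n)%:E < +oo)%E.
Proof.
move=> /andP [h0 h1].
have h : eseries (fun n => (K * th ^+ n)%:E) @ \oo --> (K * (1 - th)^-1)%:E.
  apply: cvg_EFin; first by apply: nearW => x; rewrite /eseries /= sumEFin.
  rewrite [X in X @ _ --> _](_ : _ = series (geometric K th)); last first.
    by apply/funext => x; rewrite /= /eseries /= sumEFin.
  by apply: cvg_geometric_series; rewrite ger0_norm.
by rewrite (cvg_lim _ h) // ltry.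
Qed.

Lemma sqd0 (P Q : Defs.point R) : sqd P Q = 0 -> P = Q.
Proof.
case: P Q => [p1 p2] [q1 q2]; rewrite /sqd /= => /eqP.
rewrite paddr_eq0 ?sqr_ge0 // !sqrf_eq0 !subr_eq0 => /andP [/eqP -> /eqP ->].
by [].
Qed.

Lemma SS_pos t : not_all_equal t -> 0 < SS t.
Proof.
move=> hT.
have p0 := sqd_ge0 (vA t) (vB t); have q0 := sqd_ge0 (vB t) (vC t); have r0 := sqd_ge0 (vC t) (vA t).
rewrite lt_neqAle; apply/andP; split; last by rewrite /SS /pp /qq /rr; lra.
apply/eqP => h; apply: hT; split; apply: sqd0.
- apply/eqP; rewrite eq_le; apply/andP; split; rewrite /SS /pp /qq /rr in h; lra.
- apply/eqP; rewrite eq_le; apply/andP; split; rewrite /SS /pp /qq /rr in h; lra.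
Qed.

Lemma cr_chain (T : Type) (T0 : triangle R) (c : nat -> T -> 'I_6) w n :
  `|cr (tri_chain T0 c w n)| = `|cr T0| / 6 ^+ n.
Proof.
elim: n => [|n IH]; first by rewrite expr0 divr1.
rewrite [tri_chain _ _ _ _]/=.
set t := tri_chain T0 c w n in IH *.
have -> : `|cr (subdiv_child (c n w) t)| = `|cr t| / 6.
  rewrite -sqrtr_sqr cr_child.
  have -> : cr t ^+ 2 / 36 = (`|cr t| / 6) ^+ 2.
    by rewrite expr_div_n real_normK ?num_real //; congr (_ / _); rewrite expr2 -natrM.
  by rewrite sqrtr_sqr ger0_norm // divr_ge0 // ler0n.
by rewrite IH exprSr invfM mulrA.
Qed.

Lemma y_bound t n (a c0 : R) : 0 < SS t -> `|cr t| = c0 / 6 ^+ n -> gg t <= a ^+ n -> 0 < a ->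
  char_y t <= 3 * c0 * (a ^+ 2 / 6) ^+ n.
Proof.
move=> hS hc hg ha.
apply: le_trans (char_y_le t hS) _.
have s6 : 0 < (6 : R) ^+ n by apply: exprn_gt0; apply: ltr0n.
have c00 : 0 <= c0.
  have : 0 <= c0 / 6 ^+ n by rewrite -hc normr_ge0.
  by rewrite pmulr_lge0 // invr_gt0.
have g2 : (SS t)^-1 <= (a ^+ n) ^+ 2.
  have e : (SS t)^-1 = gg t ^+ 2 by rewrite /gg sqr_sqrtr // invr_ge0 ltW.
  rewrite e ler_sqr ?nnegrE //; first by apply: sqrtr_ge0.
  by apply: exprn_ge0; apply: ltW.
rewrite hc.
have -> : 3 * (c0 / 6 ^+ n) / SS t = (3 * c0) * ((SS t)^-1 / 6 ^+ n) by ring.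
have -> : (a ^+ 2 / 6) ^+ n = (a ^+ n) ^+ 2 / 6 ^+ n by rewrite expr_div_n -exprM mulnC exprM.
apply: ler_wpM2l; first by apply: mulr_ge0 => //; apply: ler0n.
by rewrite ler_pM2r // invr_gt0.
Qed.

Lemma esup_le (u : nat -> \bar R) (l : \bar R) N :
  (forall j, (N <= j)%N -> (u j <= l)%E) -> (limn_esup u <= l)%E.
Proof.
move=> h; rewrite /limn_esup /limf_esup.
apply: le_trans (ereal_inf_lbound _) _.
  exists [set j | (N <= j)%N]; first by exists N.
  reflexivity.
by apply: ge_ereal_sup => _ [j hj <-]; apply: h.
Qed.

Lemma lnE_bound (y K be chi : R) (j : nat) : 0 <= y -> y <= K * be ^+ j -> 1 <= K -> 0 < be ->
  ln be = - (2 * chi) -> ln K <= j%:R * chi -> (0 < j)%N ->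
  (((j%:R : R)^-1)%:E * lnE y <= (- chi)%:E)%E.
Proof.
move=> y0 hy hK hb hl hKj hj.
have jp : (0 : R) < j%:R by rewrite ltr0n.
rewrite /lnE; case: eqP => [_|/eqP yn].
  by rewrite gt0_muleNy ?leNye // lte_fin invr_gt0.
have yp : 0 < y by rewrite lt_neqAle eq_sym yn y0.
have Kp : 0 < K by lra.
have bj : 0 < be ^+ j by apply: exprn_gt0.
have h1 : ln y <= ln K + j%:R * ln be.
  rewrite mulr_natl -lnXn // -lnM ?posrE //.
  by rewrite ler_ln ?posrE // mulr_gt0.
rewrite -EFinM lee_fin mulrC ler_pdivrMr //.
rewrite hl in h1.
nra.
Qed.

Lemma SS_chain_pos (T : Type) (T0 : triangle R) (c : nat -> T -> 'I_6) w :
  0 < SS T0 -> forall j, 0 < SS (tri_chain T0 c w j).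
Proof. by move=> h; elim => [|j IH] //=; apply: SS_child_pos. Qed.

Lemma main_lemma :
  exists chi : R, 0 < chi /\
  forall (T0 : triangle R), not_all_equal T0 ->
  forall (d : measure_display) (T : measurableType d) (P : probability T R)
         (c : nat -> T -> 'I_6),
  iid_uniform6 P c ->
  {ae P, forall w,
     (limn_esup (fun n : nat =>
        ((n%:R)^-1)%:E * lnE (char_y (tri_chain T0 c w n)))
      <= (- chi)%:E)%E}.
Proof.
pose a : R := 244 / 100.
pose be : R := a ^+ 2 / 6.
have ha : 0 < a by rewrite /a; lra.
have hb0 : 0 < be by rewrite /be /a; lra.
have hb1 : be < 1 by rewrite /be /a; lra.
pose chi := - ln be / 2.
have hlb : ln be < 0 by apply: ln_lt0; rewrite hb0 hb1.
have hchi : 0 < chi by rewrite /chi; lra.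
exists chi; split => //.
move=> T0 hT0 d T P c hc.
have hS0 := SS_pos T0 hT0.
pose th : R := (146 / 10) / (6 * a).
pose U n := BU c n (allseq n) (fun s => a ^+ n < gg (app T0 s)).
have mU : forall n, measurable (U n) by move=> n; apply: BU_meas; exact: hc.1.
have PU : forall n, (P (U n) <= (gg T0 * th ^+ n)%:E)%E by move=> n; apply: PU_le.
have PL : P (lim_sup_set U) = 0.
  apply: lim_sup_set_cvg0 => //.
  have hth : 0 <= th < 1 by rewrite /th /a; apply/andP; split; lra.
  apply: le_lt_trans (geo_fin (gg T0) th hth).
  by apply: lee_nneseries => // n _; exact: PU.
exists (lim_sup_set U); split => //.
  by apply: bigcap_measurable => // k _; apply: bigcup_measurable => j _; exact: mU.
move=> w /= hw n _.
apply: contrapT => hn; apply: hw.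
have gle : forall j, (n <= j)%N -> gg (tri_chain T0 c w j) <= a ^+ j.
  move=> j hj; rewrite leNgt; apply/negP => hb; apply: hn; exists j => //.
  apply: (@in_BU T c j (allseq j) _ (sw c w j) w).
  - by apply: allseqP; rewrite size_map size_iota.
  - by rewrite -chain_app.
  - exact: in_cyl.
pose K := Num.max (3 * `|cr T0|) 1.
have hK1 : 1 <= K by rewrite le_max lexx orbT.
pose N1 := Num.bound (ln K / chi).
have hN1 : ln K / chi < N1%:R.
  by apply: archi_boundP; apply: divr_ge0; [apply: ln_ge0 | apply: ltW].
apply: (esup_le _ _ (maxn (maxn n N1) 1)) => j hj.
have hjn : (n <= j)%N by move: hj; rewrite !geq_max => /andP [/andP [-> _] _].
have hjN : (N1 <= j)%N by move: hj; rewrite !geq_max => /andP [/andP [_ ->] _].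
have hj1 : (0 < j)%N by move: hj; rewrite !geq_max => /andP [_ ->].
apply: (lnE_bound _ K be) => //.
- by apply: sqrtr_ge0.
- apply: le_trans (y_bound _ _ _ _ (SS_chain_pos _ T0 c w hS0 j) (cr_chain _ T0 c w j) (gle j hjn) ha) _.
  apply: ler_wpM2r; first by apply: exprn_ge0; apply: ltW.
  by rewrite le_max lexx.
- by rewrite /chi; field.
- have : N1%:R <= (j%:R : R) by rewrite ler_nat.
  move: hN1; rewrite ltr_pdivrMr //.
  move=> h1 h2; have : N1%:R * chi <= j%:R * chi by rewrite ler_pM2r.
  lra.
Qed.
End G.

Theorem theorem1 (R : realType) :
  exists chi : R, 0 < chi /\
  forall (T0 : triangle R), not_all_equal T0 ->
  forall (d : measure_display) (T : measurableType d) (P : probability T R)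
         (c : nat -> T -> 'I_6),
  iid_uniform6 P c ->
  {ae P, forall w,
     (limn_esup (fun n : nat =>
        ((n%:R)^-1)%:E * lnE (char_y (tri_chain T0 c w n)))
      <= (- chi)%:E)%E}.
Proof. exact: main_lemma. Qed.
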